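(* Let $N\in\mathbb{N}$ and let $\mathbf{Y}$ be an $N$-sgrm over $\mathbb{R}^d$ on $[0,T]$. Then there exists exactly one sgrm $\mathbf{X}$ which is an extension of $\mathbf{Y}$ and is minimal in the sense that $\dot{\mathbf{X}}_{s,s}\in\mathcal{L}^N(\mathbb{R}^d)\subset\mathcal{L}((\mathbb{R}^d))$ for all $s\in[0,T]$. This $\mathbf{X}$ satisfies $\dot{\mathbf{X}}_{s,s}=\dot{\mathbf{Y}}_{s,s}$ for all $s$. Moreover, for every interval $[s,t]\subset[0,T]$, $\mathbf{X}_{s,t}$ depends only on $\{\mathbf{Y}|_{[u,v]}: s\le u\le v\le t\}$.
   Context: Fix $T>0$, $d\ge1$. $T((\mathbb{R}^d))$ is the algebra of formal tensor series $\mathbf{x}=\sum_w\mathbf{x}^we_w$ over words $w$ in letters $\{1,\dots,d\}$ (including the empty word $\mathbf{1}$) with concatenation product $\otimes$; $\langle\mathbf{x},w\rangle:=\mathbf{x}^w$. $T^N(\mathbb{R}^d)$ is the span of words of length $\le N$, viewed as the quotient of $T((\mathbb{R}^d))$ by series supported on words of length $>N$, with induced product $\otimes_N$ and projection $\mathrm{proj}_N$. Shuffle product: bilinear, $\mathbf{1}$ is the unit, $wi\sqcup\!\sqcup vj=(w\sqcup\!\sqcup vj)i+(wi\sqcup\!\sqcup v)j$. $\mathcal{L}(\mathbb{R}^d)$: Lie polynomials (Lie algebra generated by $e_1,\dots,e_d$ under the commutator of $\otimes$); $\mathcal{L}^N(\mathbb{R}^d)=\mathrm{proj}_N\mathcal{L}(\mathbb{R}^d)$,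 viewed inside $T((\mathbb{R}^d))$ as polynomials of degree $\le N$; $\mathcal{L}((\mathbb{R}^d))$: Lie series. An $N$-sgrm is a non-zero map $\mathbf{X}:[0,T]^2\to T^N(\mathbb{R}^d)$ with (i) $\langle\mathbf{X}_{s,t},v\sqcup\!\sqcup w\rangle=\langle\mathbf{X}_{s,t},v\rangle\langle\mathbf{X}_{s,t},w\rangle$ for all $s,t$ and words with $|v|+|w|\le N$; (ii) $\mathbf{X}_{s,u}\otimes_N\mathbf{X}_{u,t}=\mathbf{X}_{s,t}$; (iii) $t\mapsto\langle\mathbf{X}_{s,t},w\rangle$ smooth for each $|w|\le N$ and each $s$. An sgrm is a non-zero map $[0,T]^2\to T((\mathbb{R}^d))$ satisfying (i)–(iii) for all words, with $\otimes$. The diagonal derivative is $\dot{\mathbf{X}}_{s,s}:=\partial_t|_{t=s}\mathbf{X}_{s,t}$ (coordinatewise). An sgrm $\mathbf{X}$ is an extension of an $N$-sgrm $\mathbf{Y}$ if $\langle\mathbf{X}_{s,t},w\rangle=\langle\mathbf{Y}_{s,t},w\rangle$ for all $s,t$ and all words with $|w|\le N$. *)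

(* Defs.v *)
From Stdlib Require Import Reals List Arith Lra.
From Coquelicot Require Import Coquelicot.
Import ListNotations.
Open Scope R_scope.

Definition word := list nat.
Definition valid (d : nat) (w : word) : Prop :=
  List.Forall (fun i : nat => (1 <= i)%nat /\ (i <= d)%nat) w.

(* Tensor series: coefficient maps  w |-> <x, w>. *)
Definition series := word -> R.

Definition conc (x y : series) : series :=
  fun w => sum_f_R0 (fun k => x (firstn k w) * y (skipn k w)) (length w).

(* Shuffle product of words, as the list (multiset) of words it sums.
   shr works on reversed words so that the recursion
   wi ⧢ vj = (w ⧢ vj) i + (wi ⧢ v) j  is followed literally. *)
Fixpoint shr (u v : word) : list word :=
  match u with
  | [] => [v]
  | a :: u' =>
      (fix aux (v : word) : list word :=
         match v with
         | [] => [u]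
         | b :: v' => map (cons a) (shr u' v) ++ map (cons b) (aux v')
         end) v
  end.

Definition shuffle (v w : word) : list word :=
  map (@rev nat) (shr (rev v) (rev w)).

Definition pair_list (x : series) (l : list word) : R :=
  fold_right (fun w acc => x w + acc) 0 l.

Definition e_letter (i : nat) : series :=
  fun w => match w with [j] => if Nat.eqb i j then 1 else 0 | _ => 0 end.

Inductive is_lie (d : nat) : series -> Prop :=
| lie_gen : forall i : nat, (1 <= i)%nat -> (i <= d)%nat -> is_lie d (e_letter i)
| lie_zero : is_lie d (fun _ => 0)
| lie_add : forall x y, is_lie d x -> is_lie d y -> is_lie d (fun w => x w + y w)
| lie_scal : forall c x, is_lie d x -> is_lie d (fun w => c * x w)
| lie_bracket : forall x y, is_lie d x -> is_lie d y ->
    is_lie d (fun w => conc x y w - conc y x w)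
| lie_ext : forall x y, (forall w, x w = y w) -> is_lie d x -> is_lie d y.

Definition lie_trunc (d N : nat) (x : series) : Prop :=
  exists y, is_lie d y /\
    forall w, x w = if Nat.leb (length w) N then y w else 0.

Definition has_deriv_within (a b : R) (f : R -> R) (x l : R) : Prop :=
  filterlim (fun y => (f y - f x) / (y - x))
    (within (fun y => a <= y <= b /\ y <> x) (locally x)) (locally l).

Definition smooth_on (a b : R) (f : R -> R) : Prop :=
  exists F : nat -> R -> R,
    (forall x, a <= x <= b -> F O x = f x) /\
    (forall n x, a <= x <= b -> has_deriv_within a b (F n) x (F (S n) x)).

Definition in_I (T s : R) : Prop := 0 <= s <= T.

Definition gpath := R -> R -> series.

(* N-sgrm (all conditions restricted to words of length <= N, i.e. in T^N). *)
Definition N_sgrm (d : nat) (T : R) (N : nat) (Y : gpath) : Prop :=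
  (exists s t w, in_I T s /\ in_I T t /\ valid d w /\ (length w <= N)%nat
     /\ Y s t w <> 0) /\
  (forall s t v w, in_I T s -> in_I T t -> valid d v -> valid d w ->
     (length v + length w <= N)%nat ->
     pair_list (Y s t) (shuffle v w) = Y s t v * Y s t w) /\
  (forall s u t w, in_I T s -> in_I T u -> in_I T t -> valid d w ->
     (length w <= N)%nat -> conc (Y s u) (Y u t) w = Y s t w) /\
  (forall s w, in_I T s -> valid d w -> (length w <= N)%nat ->
     smooth_on 0 T (fun t => Y s t w)).

Definition sgrm (d : nat) (T : R) (X : gpath) : Prop :=
  (exists s t w, in_I T s /\ in_I T t /\ valid d w /\ X s t w <> 0) /\
  (forall s t v w, in_I T s -> in_I T t -> valid d v -> valid d w ->
     pair_list (X s t) (shuffle v w) = X s t v * X s t w) /\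
  (forall s u t w, in_I T s -> in_I T u -> in_I T t -> valid d w ->
     conc (X s u) (X u t) w = X s t w) /\
  (forall s w, in_I T s -> valid d w -> smooth_on 0 T (fun t => X s t w)).

Definition extends (d : nat) (T : R) (N : nat) (X Y : gpath) : Prop :=
  forall s t w, in_I T s -> in_I T t -> valid d w -> (length w <= N)%nat ->
    X s t w = Y s t w.

Definition minimal (d : nat) (T : R) (N : nat) (X : gpath) : Prop :=
  forall s, in_I T s ->
    exists l, lie_trunc d N l /\
      forall w, valid d w -> has_deriv_within 0 T (fun t => X s t w) s (l w).

(* Main.v *)
Require Import Defs.
From Stdlib Require Import Reals List Arith.
From Coquelicot Require Import Coquelicot.
Open Scope R_scope.
From Stdlib Require Import Lia Lra Morphisms Setoid Classical IndefiniteDescription ClassicalEpsilon.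
Import ListNotations.

Fixpoint lsum {A : Type} (f : A -> R) (l : list A) : R :=
  match l with [] => 0 | x :: l' => f x + lsum f l' end.

Lemma pl_lsum (p : series) l : pair_list p l = lsum p l.
Proof. induction l; simpl; auto. rewrite IHl; auto. Qed.

Lemma lsum_app {A} (f : A -> R) l1 l2 : lsum f (l1 ++ l2) = lsum f l1 + lsum f l2.
Proof. induction l1; simpl; [lra|]. rewrite IHl1; lra. Qed.

Lemma lsum_map {A B} (f : B -> R) (g : A -> B) l : lsum f (map g l) = lsum (fun x => f (g x)) l.
Proof. induction l; simpl; auto. rewrite IHl; auto. Qed.

Lemma lsum_ext {A} (f g : A -> R) l : (forall x, In x l -> f x = g x) -> lsum f l = lsum g l.
Proof. induction l; simpl; intros H; auto. rewrite H, IHl; auto. Qed.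

#[global] Instance lsum_proper {A} : Proper (pointwise_relation A eq ==> eq ==> eq) (@lsum A).
Proof. intros f g H l l' <-. apply lsum_ext. intros; apply H. Qed.

Lemma lsum_plus {A} (f g : A -> R) l : lsum (fun x => f x + g x) l = lsum f l + lsum g l.
Proof. induction l; simpl; [lra|]. rewrite IHl; lra. Qed.

Lemma lsum_minus {A} (f g : A -> R) l : lsum (fun x => f x - g x) l = lsum f l - lsum g l.
Proof. induction l; simpl; [lra|]. rewrite IHl; lra. Qed.

Lemma lsum_scal {A} (c : R) (f : A -> R) l : lsum (fun x => c * f x) l = c * lsum f l.
Proof. induction l; simpl; [lra|]. rewrite IHl; lra. Qed.

Lemma lsum_scal_r {A} (c : R) (f : A -> R) l : lsum (fun x => f x * c) l = lsum f l * c.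
Proof. induction l; simpl; [lra|]. rewrite IHl; lra. Qed.

Lemma lsum_zero {A} (f : A -> R) l : (forall x, In x l -> f x = 0) -> lsum f l = 0.
Proof. induction l; simpl; intros H; auto. rewrite H, IHl; auto. lra. Qed.

Lemma lsum_swap {A B} (f : A -> B -> R) l1 l2 :
  lsum (fun x => lsum (fun y => f x y) l2) l1 = lsum (fun y => lsum (fun x => f x y) l1) l2.
Proof.
  induction l1; simpl. { symmetry; apply lsum_zero; auto. }
  rewrite IHl1, <- lsum_plus; auto.
Qed.

Lemma sum_f_R0_lsum f n : sum_f_R0 f n = lsum f (seq 0 (S n)).
Proof.
  induction n; [simpl; lra|]. cbn [sum_f_R0]. rewrite IHn. rewrite (seq_S (S n)).
  rewrite lsum_app. simpl. lra.
Qed.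

Definition splits_sig : { f : word -> list (word * word) |
  forall w, f w = map (fun k => (firstn k w, skipn k w)) (seq 0 (S (length w))) }.
Proof. exists (fun w => map (fun k => (firstn k w, skipn k w)) (seq 0 (S (length w)))). reflexivity. Qed.
Definition splits : word -> list (word * word) := proj1_sig splits_sig.
Lemma splits_def w : splits w = map (fun k => (firstn k w, skipn k w)) (seq 0 (S (length w))).
Proof. apply (proj2_sig splits_sig). Qed.

Lemma conc_splits A B w : conc A B w = lsum (fun pq => A (fst pq) * B (snd pq)) (splits w).
Proof. unfold conc. rewrite splits_def, sum_f_R0_lsum, lsum_map. reflexivity. Qed.

Lemma splits_nil : splits [] = [([], [])].
Proof. rewrite splits_def. reflexivity. Qed.

Lemma splits_cons a w : splits (a :: w) = ([], a :: w) :: map (fun pq : word * word => ((a :: fst pq, snd pq) : word * word)) (splits w).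
Proof.
  rewrite !splits_def. simpl length. change (seq 0%nat (S (S (length w)))) with (0%nat :: seq 1 (S (length w))).
  cbn [map]. f_equal. rewrite <- (seq_shift (S (length w)) 0), !map_map.
  apply map_ext. intros; reflexivity.
Qed.

Lemma splits_snoc w a : splits (w ++ [a]) =
  map (fun pq : word * word => ((fst pq, snd pq ++ [a]) : word * word)) (splits w) ++ [(w ++ [a], [])].
Proof.
  induction w as [|b w IH].
  - rewrite !splits_def. reflexivity.
  - change ((b :: w) ++ [a]) with (b :: (w ++ [a])). rewrite !splits_cons, IH.
    rewrite map_app, !map_map. cbn [map fst snd app]. rewrite map_map. reflexivity.
Qed.

Lemma splits_app w p q : In (p, q) (splits w) -> w = p ++ q.
Proof.
  rewrite splits_def, in_map_iff. intros [k [E _]]. inversion E. symmetry. apply firstn_skipn.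
Qed.
Lemma lsum_splits_snoc (F : word * word -> R) w a :
  lsum F (splits (w ++ [a])) = lsum (fun pq : word * word => F (fst pq, snd pq ++ [a])) (splits w) + F (w ++ [a], []).
Proof. rewrite splits_snoc, lsum_app, lsum_map. cbn [lsum]. rewrite Rplus_0_r. reflexivity. Qed.

Lemma lsum_splits_cons (F : word * word -> R) a w :
  lsum F (splits (a :: w)) = F ([], a :: w) + lsum (fun pq : word * word => F (a :: fst pq, snd pq)) (splits w).
Proof. rewrite splits_cons. cbn [lsum]. rewrite lsum_map. reflexivity. Qed.

Lemma lsum_splits_nil (F : word * word -> R) : lsum F (splits []) = F ([], []).
Proof. rewrite splits_nil. cbn [lsum]. apply Rplus_0_r. Qed.



Definition e0 : series := fun w => match w with [] => 1 | _ => 0 end.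
Definition rd (p : series) (a : nat) : series := fun z => p (z ++ [a]).

Lemma conc_nil A B : conc A B [] = A [] * B [].
Proof. rewrite conc_splits, splits_nil. simpl. lra. Qed.

Lemma conc_cons A B a w : conc A B (a :: w) = A [] * B (a :: w) + conc (fun z => A (a :: z)) B w.
Proof. rewrite !conc_splits, splits_cons. simpl. rewrite lsum_map. reflexivity. Qed.

Lemma conc_snoc A B w a : conc A B (w ++ [a]) = conc A (fun z => B (z ++ [a])) w + A (w ++ [a]) * B [].
Proof. rewrite !conc_splits, splits_snoc, lsum_app, lsum_map. cbn [lsum fst snd]. rewrite Rplus_0_r. reflexivity. Qed.

Lemma conc_ext_gen A A' B B' w :
  (forall p q, w = p ++ q -> A p = A' p /\ B q = B' q) -> conc A B w = conc A' B' w.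
Proof.
  intros H. rewrite !conc_splits. apply lsum_ext. intros [p q] Hin.
  destruct (H p q (splits_app _ _ _ Hin)) as [H1 H2]. simpl. rewrite H1, H2; auto.
Qed.

Lemma conc_zero_l B w : conc (fun _ => 0) B w = 0.
Proof. rewrite conc_splits. apply lsum_zero. intros; lra. Qed.

Lemma conc_zero_r A w : conc A (fun _ => 0) w = 0.
Proof. rewrite conc_splits. apply lsum_zero. intros; lra. Qed.

Lemma conc_plus_l A A' B w : conc (fun z => A z + A' z) B w = conc A B w + conc A' B w.
Proof. rewrite !conc_splits, <- lsum_plus. apply lsum_ext; intros; lra. Qed.

Lemma conc_plus_r A B B' w : conc A (fun z => B z + B' z) w = conc A B w + conc A B' w.
Proof. rewrite !conc_splits, <- lsum_plus. apply lsum_ext; intros; lra. Qed.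

Lemma conc_scal_l c A B w : conc (fun z => c * A z) B w = c * conc A B w.
Proof. rewrite !conc_splits, <- lsum_scal. apply lsum_ext; intros; lra. Qed.

Lemma conc_scal_r c A B w : conc A (fun z => c * B z) w = c * conc A B w.
Proof. rewrite !conc_splits, <- lsum_scal. apply lsum_ext; intros; lra. Qed.

Lemma conc_e0_l B w : conc e0 B w = B w.
Proof.
  destruct w as [|a w]. - rewrite conc_nil; simpl; lra.
  - rewrite conc_cons. simpl. rewrite conc_zero_l. lra.
Qed.

Lemma conc_e0_r A w : conc A e0 w = A w.
Proof.
  induction w as [|a w _] using rev_ind. - rewrite conc_nil; simpl; lra.
  - rewrite conc_snoc. rewrite (conc_ext_gen A A _ (fun _ => 0)).
    + rewrite conc_zero_r. simpl. lra.
    + intros; split; auto. destruct q; reflexivity.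
Qed.

Lemma conc_assoc A B C w : conc (conc A B) C w = conc A (conc B C) w.
Proof.
  revert A. induction w as [|a w IH]; intros A.
  - rewrite !conc_nil. lra.
  - rewrite !conc_cons, conc_nil.
    rewrite (conc_ext_gen (fun z => conc A B (a :: z)) (fun z => A [] * B (a :: z) + conc (fun z => A (a :: z)) B z) C C).
    2:{ intros; split; auto. apply conc_cons. }
    rewrite conc_plus_l, conc_scal_l, IH. ring.
Qed.

Lemma shr_nil_l v : shr [] v = [v].
Proof. reflexivity. Qed.

Lemma shr_nil_r u : shr u [] = [u].
Proof. destruct u; reflexivity. Qed.

Lemma shr_cons_cons a u b v :
  shr (a :: u) (b :: v) = map (cons a) (shr u (b :: v)) ++ map (cons b) (shr (a :: u) v).
Proof. reflexivity. Qed.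

Lemma shuffle_nil_l v : shuffle [] v = [v].
Proof. unfold shuffle. simpl. rewrite rev_involutive. reflexivity. Qed.

Lemma shuffle_nil_r u : shuffle u [] = [u].
Proof. unfold shuffle. simpl. rewrite shr_nil_r. simpl. rewrite rev_involutive. reflexivity. Qed.

Lemma shuffle_snoc u i v j : shuffle (u ++ [i]) (v ++ [j]) =
  map (fun x => x ++ [i]) (shuffle u (v ++ [j])) ++ map (fun x => x ++ [j]) (shuffle (u ++ [i]) v).
Proof.
  unfold shuffle. rewrite !rev_unit. rewrite shr_cons_cons. rewrite map_app, !map_map.
  f_equal; apply map_ext; intros; simpl; reflexivity.
Qed.

Lemma shr_len u v z : In z (shr u v) -> length z = (length u + length v)%nat.
Proof.
  revert v z. induction u as [|a u IHu]; intros v.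
  - intros z. simpl. intros [<-|[]]; auto.
  - induction v as [|b v IHv]; intros z.
    + rewrite shr_nil_r. simpl. intros [<-|[]]. simpl. lia.
    + rewrite shr_cons_cons, in_app_iff, !in_map_iff. intros [[x [<- H]]|[x [<- H]]].
      * apply IHu in H. simpl in *. lia.
      * apply IHv in H. simpl in *. lia.
Qed.

Lemma shr_Forall (P : nat -> Prop) u v z : List.Forall P u -> List.Forall P v -> In z (shr u v) -> List.Forall P z.
Proof.
  revert v z. induction u as [|a u IHu]; intros v.
  - intros z. simpl. intros _ Hv [<-|[]]; auto.
  - induction v as [|b v IHv]; intros z.
    + rewrite shr_nil_r. simpl. intros Hu _ [<-|[]]. auto.
    + intros Hu Hv. inversion Hu; inversion Hv; subst.
      rewrite shr_cons_cons, in_app_iff, !in_map_iff. intros [[x [<- H]]|[x [<- H]]].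
      * constructor; auto. apply (IHu (b :: v)); auto.
      * constructor; auto.
Qed.

Lemma shuffle_len u v z : In z (shuffle u v) -> length z = (length u + length v)%nat.
Proof.
  unfold shuffle. rewrite in_map_iff. intros [x [<- H]]. apply shr_len in H.
  rewrite !length_rev in *. auto.
Qed.

Lemma shuffle_Forall (P : nat -> Prop) u v z : List.Forall P u -> List.Forall P v -> In z (shuffle u v) -> List.Forall P z.
Proof.
  unfold shuffle. rewrite in_map_iff. intros Hu Hv [x [<- H]]. apply Forall_rev.
  apply (shr_Forall P _ _ _ (Forall_rev Hu) (Forall_rev Hv) H).
Qed.

Definition PL (p : series) (u v : word) : R := lsum p (shuffle u v).

Lemma PL_nil_nil p : PL p [] [] = p [].
Proof. unfold PL. rewrite shuffle_nil_l. simpl. lra. Qed.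

Lemma PL_nil_l p v : PL p [] v = p v.
Proof. unfold PL. rewrite shuffle_nil_l. simpl. lra. Qed.

Lemma PL_nil_r p u : PL p u [] = p u.
Proof. unfold PL. rewrite shuffle_nil_r. simpl. lra. Qed.

Lemma PL_snoc_snoc p u i v j :
  PL p (u ++ [i]) (v ++ [j]) = PL (rd p i) u (v ++ [j]) + PL (rd p j) (u ++ [i]) v.
Proof. unfold PL. rewrite shuffle_snoc, lsum_app, !lsum_map. reflexivity. Qed.

Lemma PL_decomp p a v : ~ (a = [] /\ v = []) ->
  PL p a v = (match rev a with [] => 0 | i :: ra => PL (rd p i) (rev ra) v end)
           + (match rev v with [] => 0 | j :: rv => PL (rd p j) a (rev rv) end).
Proof.
  intros Hne. destruct (rev a) as [|i ra] eqn:Ea; destruct (rev v) as [|j rv] eqn:Ev.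
  - exfalso. apply Hne. split; [rewrite <- (rev_involutive a), Ea|rewrite <- (rev_involutive v), Ev]; auto.
  - assert (a = []) by (rewrite <- (rev_involutive a), Ea; auto).
    assert (v = rev rv ++ [j]) by (rewrite <- (rev_involutive v), Ev; auto). subst.
    rewrite !PL_nil_l. unfold rd. lra.
  - assert (v = []) by (rewrite <- (rev_involutive v), Ev; auto).
    assert (a = rev ra ++ [i]) by (rewrite <- (rev_involutive a), Ea; auto). subst.
    rewrite !PL_nil_r. unfold rd. lra.
  - assert (v = rev rv ++ [j]) by (rewrite <- (rev_involutive v), Ev; auto).
    assert (a = rev ra ++ [i]) by (rewrite <- (rev_involutive a), Ea; auto). subst.
    rewrite PL_snoc_snoc. lra.
Qed.
Lemma PL_ext f g u v : (forall z, f z = g z) -> PL f u v = PL g u v.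
Proof. intros H; unfold PL; apply lsum_ext; auto. Qed.
Lemma PL_plus f g u v : PL (fun z => f z + g z) u v = PL f u v + PL g u v.
Proof. unfold PL; apply lsum_plus. Qed.
Lemma PL_scal_r f c u v : PL (fun z => f z * c) u v = PL f u v * c.
Proof. unfold PL; apply lsum_scal_r. Qed.
Lemma PL_scal_l f c u v : PL (fun z => c * f z) u v = c * PL f u v.
Proof. unfold PL; apply lsum_scal. Qed.

Lemma PL_ext_on p q u v : (forall z, length z = (length u + length v)%nat -> q z = p z) -> PL p u v = PL q u v.
Proof. intros H. unfold PL. apply lsum_ext. intros z Hz. symmetry. apply H. apply (shuffle_len u v z Hz). Qed.

Lemma PL_ext_valid (P : nat -> Prop) p q u v : List.Forall P u -> List.Forall P v ->
  (forall z, List.Forall P z -> length z = (length u + length v)%nat -> p z = q z) -> PL p u v = PL q u v.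
Proof. intros Hu Hv H. unfold PL. apply lsum_ext. intros z Hz. apply H.
  apply (shuffle_Forall P u v z Hu Hv Hz). apply (shuffle_len u v z Hz). Qed.

Lemma PL_zero_on p u v : (forall z, length z = (length u + length v)%nat -> p z = 0) -> PL p u v = 0.
Proof. intros H. unfold PL. apply lsum_zero. intros z Hz. apply H. apply (shuffle_len u v z Hz). Qed.

Lemma PL_lsum p u v : PL p u v = lsum p (shuffle u v).
Proof. reflexivity. Qed.

Global Opaque PL.

Lemma snoc_case (u : list nat) : u = [] \/ exists u' i, u = u' ++ [i].
Proof.
  destruct (rev u) as [|i ru] eqn:E.
  - left. rewrite <- (rev_involutive u), E. reflexivity.
  - right. exists (rev ru), i. rewrite <- (rev_involutive u), E. reflexivity.
Qed.

Lemma rd_conc A B i z : rd (conc A B) i z = conc A (rd B i) z + rd A i z * B [].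
Proof. unfold rd. rewrite conc_snoc. reflexivity. Qed.

Definition Sdbl (A B : series) (u v : word) : R :=
  lsum (fun uu => lsum (fun vv => PL A (fst uu) (fst vv) * PL B (snd uu) (snd vv)) (splits v)) (splits u).

Lemma Sdbl_nil_r A B u : Sdbl A B u [] = conc A B u.
Proof.
  unfold Sdbl. rewrite conc_splits. apply lsum_ext. intros uu _. rewrite splits_nil. cbn [lsum fst snd].
  rewrite !PL_nil_r. lra.
Qed.

Lemma Sdbl_nil_l A B v : Sdbl A B [] v = conc A B v.
Proof.
  unfold Sdbl. rewrite conc_splits, splits_nil. cbn [lsum fst snd]. rewrite Rplus_0_r. apply lsum_ext. intros vv _.
  rewrite !PL_nil_l. lra.
Qed.

Lemma coprod_aux n : forall u v A B, (length u + length v <= n)%nat -> PL (conc A B) u v = Sdbl A B u v.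
Proof.
  induction n as [|n IH]; intros u v A B Hn.
  - destruct u; [|simpl in Hn; lia]. rewrite Sdbl_nil_l, PL_nil_l. reflexivity.
  - destruct (snoc_case u) as [->|[u' [i ->]]]. { rewrite Sdbl_nil_l, PL_nil_l. reflexivity. }
    destruct (snoc_case v) as [->|[v' [j ->]]]. { rewrite Sdbl_nil_r, PL_nil_r. reflexivity. }
    rewrite length_app in Hn. rewrite length_app in Hn. simpl in Hn.
    rewrite PL_snoc_snoc. rewrite (PL_ext _ _ _ _ (rd_conc A B i)), (PL_ext _ _ _ _ (rd_conc A B j)).
    rewrite !PL_plus, !PL_scal_r. rewrite !IH by (rewrite ?length_app; simpl; lia).
    assert (E: PL (rd A i) u' (v' ++ [j]) * B [] + PL (rd A j) (u' ++ [i]) v' * B [] =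
               PL A (u' ++ [i]) (v' ++ [j]) * B []) by (rewrite PL_snoc_snoc; ring).
    transitivity (Sdbl A (rd B i) u' (v' ++ [j]) + Sdbl A (rd B j) (u' ++ [i]) v' + PL A (u' ++ [i]) (v' ++ [j]) * B []);
      [rewrite <- E; ring|].
    unfold Sdbl. repeat setoid_rewrite lsum_splits_snoc. cbn [fst snd].
    repeat setoid_rewrite PL_snoc_snoc. repeat setoid_rewrite PL_nil_l. repeat setoid_rewrite PL_nil_r.
    repeat setoid_rewrite Rmult_plus_distr_l. repeat setoid_rewrite lsum_plus.
    unfold rd. ring.
Qed.

Lemma coprod A B u v : PL (conc A B) u v = Sdbl A B u v.
Proof. apply (coprod_aux (length u + length v)); lia. Qed.

Definition sgn (n : nat) : R := (-1) ^ n.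

Definition Gs (g : nat -> nat -> R) (p : series) (w : word) : R :=
  lsum (fun xv : word * word => g (length (fst xv)) (length (snd xv)) * PL p (rev (fst xv)) (snd xv)) (splits w).

Lemma nonempty_both (w : word) : w <> [] -> exists i w'' w' j, w = i :: w'' /\ w = w' ++ [j].
Proof.
  intros H. destruct w as [|i w'']; [congruence|].
  destruct (snoc_case (i :: w'')) as [E|[w' [j E]]]; [discriminate|].
  exists i, w'', w', j. auto.
Qed.

Lemma Gs_rec g p i w'' w' j : i :: w'' = w' ++ [j] ->
  Gs g p (i :: w'') =
    lsum (fun xv : word * word => g (length (fst xv)) (S (length (snd xv))) * PL (rd p j) (rev (fst xv)) (snd xv)) (splits w')
  + lsum (fun xv : word * word => g (S (length (fst xv))) (length (snd xv)) * PL (rd p i) (rev (fst xv)) (snd xv)) (splits w'').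
Proof.
  intros Ew. unfold Gs.
  set (f1 := fun xv : word * word => g (length (fst xv)) (length (snd xv)) *
     (match fst xv with [] => 0 | i' :: x' => PL (rd p i') (rev x') (snd xv) end)).
  set (f2 := fun xv : word * word => g (length (fst xv)) (length (snd xv)) *
     (match rev (snd xv) with [] => 0 | j' :: rv => PL (rd p j') (rev (fst xv)) (rev rv) end)).
  transitivity (lsum f1 (splits (i :: w'')) + lsum f2 (splits (i :: w''))).
  { rewrite <- lsum_plus. apply lsum_ext. intros [x v] Hin. apply splits_app in Hin.
    unfold f1, f2; cbn [fst snd]. rewrite <- Rmult_plus_distr_l. f_equal.
    rewrite PL_decomp. rewrite rev_involutive. reflexivity.
    intros [E1 E2]. destruct x; [|simpl in E1; destruct (rev x); simpl in E1; discriminate]. subst. discriminate. }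
  rewrite Rplus_comm. f_equal.
  - rewrite Ew, lsum_splits_snoc. unfold f2. cbn [fst snd]. simpl (rev []). rewrite Rmult_0_r, Rplus_0_r.
    apply lsum_ext. intros [x v] _. cbn [fst snd]. rewrite rev_unit, rev_involutive, length_app.
    simpl. rewrite Nat.add_1_r. reflexivity.
  - rewrite lsum_splits_cons. unfold f1. cbn [fst snd]. rewrite Rmult_0_r, Rplus_0_l.
    apply lsum_ext. intros [x v] _. cbn [fst snd length]. reflexivity.
Qed.

Definition Aop := Gs (fun a _ => sgn a).
Definition Phi := Gs (fun a b => sgn a * INR b).

Lemma Aop_val n : forall p w, (length w <= n)%nat -> Aop p w = match w with [] => p [] | _ => 0 end.
Proof.
  induction n as [|n IH]; intros p w Hw.
  - destruct w; [|simpl in Hw; lia]. unfold Aop, Gs. rewrite lsum_splits_nil. cbn [fst snd length rev].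
    rewrite PL_nil_nil. unfold sgn. simpl. ring.
  - destruct w as [|i w'']. { unfold Aop, Gs. rewrite lsum_splits_nil. cbn [fst snd length rev].
      rewrite PL_nil_nil. unfold sgn. simpl. ring. }
    destruct (snoc_case (i :: w'')) as [E|[w' [j E]]]; [discriminate|].
    unfold Aop. rewrite (Gs_rec _ _ _ _ _ _ E).
    match goal with |- lsum ?F (splits w') + _ = _ => replace (lsum F (splits w')) with (Aop (rd p j) w') by reflexivity end.
    assert (H2: lsum (fun xv : word * word => sgn (S (length (fst xv))) * PL (rd p i) (rev (fst xv)) (snd xv)) (splits w'')
            = - Aop (rd p i) w'').
    { unfold Aop, Gs. match goal with |- _ = - ?X => replace (- X) with ((-1) * X) by ring end.
      rewrite <- lsum_scal. apply lsum_ext. intros; unfold sgn; simpl; ring. }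
    rewrite H2.
    assert (Lw : length (i :: w'') = S (length w')) by (rewrite E, length_app; simpl; lia).
    simpl in Hw.
    rewrite !IH by (simpl in Lw; lia).
    destruct w'' as [|c w0]; destruct w' as [|c' w1].
    + simpl in E. injection E; intros; subst. unfold rd. simpl. ring.
    + simpl in Lw; lia.
    + simpl in Lw; lia.
    + ring.
Qed.

Lemma Phi_rec p i w'' w' j : i :: w'' = w' ++ [j] ->
  Phi p (i :: w'') = Phi (rd p j) w' + (match w' with [] => p [j] | _ => 0 end) - Phi (rd p i) w''.
Proof.
  intros E. unfold Phi. rewrite (Gs_rec _ _ _ _ _ _ E).
  replace (match w' with [] => p [j] | _ => 0 end) with (Aop (rd p j) w')
    by (rewrite (Aop_val (length w')) by lia; destruct w'; reflexivity).
  unfold Aop, Gs.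
  match goal with |- ?A + ?X = ?B + ?C - ?Y => replace Y with ((-1) * X); [replace A with (B + C)|] end.
  ring. rewrite <- lsum_plus. apply lsum_ext; intros; unfold sgn; rewrite ?S_INR; simpl; ring.
  rewrite <- lsum_scal. apply lsum_ext; intros; unfold sgn; rewrite ?S_INR; simpl; ring.
Qed.

Lemma lie_lsum d (l : list nat) (f : nat -> series) :
  (forall a, In a l -> is_lie d (f a)) -> is_lie d (fun w => lsum (fun a => f a w) l).
Proof.
  induction l as [|a l IH]; intros H.
  - simpl. apply lie_zero.
  - simpl. apply lie_add; [apply H; left; auto|apply IH; intros; apply H; right; auto].
Qed.

Lemma lie_invalid d y : is_lie d y -> forall w, ~ valid d w -> y w = 0.
Proof.
  induction 1; intros w Hw.
  - unfold e_letter. destruct w as [|c [|c' w]]; auto.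
    destruct (Nat.eqb i c) eqn:E; auto. apply Nat.eqb_eq in E. subst. exfalso; apply Hw.
    constructor; auto.
  - reflexivity.
  - rewrite IHis_lie1, IHis_lie2; auto; lra.
  - rewrite IHis_lie; auto; lra.
  - assert (forall x y, (forall w, ~ valid d w -> x w = 0) -> (forall w, ~ valid d w -> y w = 0) -> conc x y w = 0).
    { intros x0 y0 Hx Hy. rewrite conc_splits. apply lsum_zero. intros [p q] Hin. apply splits_app in Hin.
      subst. cbn [fst snd]. destruct (classic (valid d p)) as [Vp|Vp].
      - destruct (classic (valid d q)) as [Vq|Vq].
        + exfalso. apply Hw. apply Forall_app; auto.
        + rewrite Hy; auto; lra.
      - rewrite Hx; auto; lra. }
    rewrite !H1; auto; lra.
  - rewrite <- H. auto.
Qed.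

Lemma lsum_seq_delta (F : nat -> R) j s len : (s <= j < s + len)%nat ->
  lsum (fun a => (if Nat.eqb a j then 1 else 0) * F a) (seq s len) = F j.
Proof.
  revert s. induction len as [|len IH]; intros s Hj; [lia|].
  simpl. destruct (Nat.eqb s j) eqn:E.
  - apply Nat.eqb_eq in E; subst. rewrite lsum_zero. ring.
    intros a Ha. apply in_seq in Ha. destruct (Nat.eqb a j) eqn:E2; [apply Nat.eqb_eq in E2; lia| ring].
  - apply Nat.eqb_neq in E. rewrite IH by lia. ring.
Qed.

Lemma e_letter_snoc a z j : e_letter a (z ++ [j]) = (if Nat.eqb a j then 1 else 0) * e0 z.
Proof.
  destruct z as [|c z]. - simpl. destruct (Nat.eqb a j); ring.
  - simpl. destruct z; simpl; ring.
Qed.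

Lemma e_letter_cons a i z : e_letter a (i :: z) = (if Nat.eqb a i then 1 else 0) * e0 z.
Proof. destruct z; simpl; [destruct (Nat.eqb a i)|]; ring. Qed.

Lemma conc_letter_r Y a w' j : conc Y (e_letter a) (w' ++ [j]) = (if Nat.eqb a j then 1 else 0) * Y w'.
Proof.
  rewrite conc_snoc. simpl (e_letter a []). rewrite Rmult_0_r, Rplus_0_r.
  rewrite (conc_ext_gen Y Y _ (fun z => (if Nat.eqb a j then 1 else 0) * e0 z)).
  - rewrite conc_scal_r, conc_e0_r. reflexivity.
  - intros; split; auto. apply e_letter_snoc.
Qed.

Lemma conc_letter_l Y a i w'' : conc (e_letter a) Y (i :: w'') = (if Nat.eqb a i then 1 else 0) * Y w''.
Proof.
  rewrite conc_cons. simpl (e_letter a []). rewrite Rmult_0_l, Rplus_0_l.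
  rewrite (conc_ext_gen _ (fun z => (if Nat.eqb a i then 1 else 0) * e0 z) Y Y).
  - rewrite conc_scal_l, conc_e0_l. reflexivity.
  - intros; split; auto. apply e_letter_cons.
Qed.

Lemma Phi_nil p : Phi p [] = 0.
Proof. unfold Phi, Gs. rewrite lsum_splits_nil. simpl. ring. Qed.

Lemma lie_Phi d n : forall p, exists y, is_lie d y /\
  forall w, valid d w -> (length w <= n)%nat -> y w = Phi p w.
Proof.
  induction n as [|n IH]; intros p.
  - exists (fun _ => 0). split; [apply lie_zero|]. intros w _ Hw. destruct w; [|simpl in Hw; lia].
    rewrite Phi_nil. reflexivity.
  - pose (ys := fun a => proj1_sig (constructive_indefinite_description _ (IH (rd p a)))).
    assert (Hys : forall a, is_lie d (ys a) /\ forall w, valid d w -> (length w <= n)%nat -> ys a w = Phi (rd p a) w).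
    { intros a. unfold ys. destruct (constructive_indefinite_description _ _) as [y Hy]. exact Hy. }
    exists (fun w => lsum (fun a => (conc (ys a) (e_letter a) w - conc (e_letter a) (ys a) w) + p [a] * e_letter a w) (seq 1 d)).
    split.
    + apply (lie_lsum d (seq 1 d) (fun a w => (conc (ys a) (e_letter a) w - conc (e_letter a) (ys a) w) + p [a] * e_letter a w)).
      intros a Ha. apply in_seq in Ha.
      apply lie_add. apply lie_bracket; [apply Hys|apply lie_gen; lia].
      apply lie_scal. apply lie_gen; lia.
    + intros w Vw Hw. destruct w as [|i w'']. { rewrite Phi_nil. apply lsum_zero. intros a _.
        rewrite !conc_nil. simpl. ring. }
      destruct (snoc_case (i :: w'')) as [E|[w' [j E]]]; [discriminate|].
      rewrite (Phi_rec _ _ _ _ _ E).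
      assert (Vi : (1 <= i <= d)%nat) by (inversion Vw; auto).
      assert (Vj : (1 <= j <= d)%nat) by (rewrite E in Vw; apply Forall_app in Vw; destruct Vw as [_ V]; inversion V; auto).
      assert (Vw'' : valid d w'') by (inversion Vw; auto).
      assert (Vw' : valid d w') by (rewrite E in Vw; apply Forall_app in Vw; tauto).
      assert (Lw : length (i :: w'') = S (length w')) by (rewrite E, length_app; simpl; lia).
      rewrite !lsum_plus, lsum_minus.
      rewrite (lsum_ext _ (fun a => (if Nat.eqb a j then 1 else 0) * ys a w')).
      2:{ intros a _. rewrite E. apply conc_letter_r. }
      rewrite (lsum_ext (fun a => conc (e_letter a) (ys a) (i :: w'')) (fun a => (if Nat.eqb a i then 1 else 0) * ys a w'')).
      2:{ intros a _. apply conc_letter_l. }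
      rewrite !lsum_seq_delta by lia.
      destruct (Hys j) as [_ Hj]. destruct (Hys i) as [_ Hi].
      rewrite Hj, Hi by (auto; simpl in Hw, Lw; lia).
      assert (Hl : lsum (fun a => p [a] * e_letter a (i :: w'')) (seq 1 d) = match w' with [] => p [j] | _ => 0 end).
      { destruct w' as [|c w1].
        * simpl in E. injection E as -> ->.
          rewrite (lsum_ext _ (fun a => (if Nat.eqb a j then 1 else 0) * p [a])).
          2:{ intros a _. simpl. destruct (Nat.eqb a j); ring. }
          rewrite lsum_seq_delta by lia. reflexivity.
        * apply lsum_zero. intros a _. rewrite E. simpl. destruct w1; simpl; ring. }
      rewrite Hl. ring.
Qed.

Definition primitive (d N : nat) (p : series) : Prop :=
  forall a b, valid d a -> valid d b -> a <> [] -> b <> [] -> (length a + length b <= N)%nat -> PL p a b = 0.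

Lemma Phi_prim d N p : primitive d N p -> forall w, valid d w -> (length w <= N)%nat ->
  Phi p w = INR (length w) * p w.
Proof.
  intros Hp w Vw Hw. destruct w as [|c w0]. { rewrite Phi_nil. simpl. ring. }
  unfold Phi, Gs. rewrite lsum_splits_cons. cbn [fst snd length rev].
  rewrite PL_nil_l. rewrite lsum_zero. unfold sgn; simpl; ring.
  intros [x v] Hin. apply splits_app in Hin. cbn [fst snd length].
  destruct v as [|b v]. { simpl. ring. }
  rewrite Hp. ring.
  - subst. inversion Vw; subst. apply Forall_app in H2. apply Forall_app; split; [apply Forall_rev; tauto|constructor; auto].
  - subst. inversion Vw; subst. apply Forall_app in H2; tauto.
  - intros H. apply (f_equal (@length nat)) in H. rewrite length_app in H. simpl in H. lia.
  - discriminate.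
  - rewrite length_app, length_rev. subst. simpl in Hw. rewrite length_app in Hw. simpl in *. lia.
Qed.

Definition ph (p : series) (n : nat) : series := fun z => if Nat.eqb (length z) n then p z else 0.

Lemma Phi_homog p n w : Phi (ph p n) w = if Nat.eqb (length w) n then Phi p w else 0.
Proof.
  unfold Phi, Gs. destruct (Nat.eqb (length w) n) eqn:E.
  - apply lsum_ext. intros [x v] Hin. apply splits_app in Hin. cbn [fst snd]. f_equal.
    apply PL_ext_on. intros z Hz. unfold ph. apply Nat.eqb_eq in E.
    rewrite length_rev in Hz. subst w. rewrite length_app in E. replace (Nat.eqb (length z) n) with true; auto.
    symmetry. apply Nat.eqb_eq. lia.
  - apply lsum_zero. intros [x v] Hin. apply splits_app in Hin. cbn [fst snd].
    rewrite PL_zero_on. ring. intros z Hz. unfold ph. rewrite length_rev in Hz. subst w.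
    rewrite length_app in E. replace (Nat.eqb (length z) n) with false; auto.
    symmetry. apply Nat.eqb_neq. apply Nat.eqb_neq in E. lia.
Qed.

Theorem friedrichs d N p : p [] = 0 -> (forall w, ~ valid d w -> p w = 0) ->
  (forall w, (N < length w)%nat -> p w = 0) -> primitive d N p -> lie_trunc d N p.
Proof.
  intros H0 Hinv Hlong Hp.
  pose (yh := fun n => proj1_sig (constructive_indefinite_description _ (lie_Phi d N (ph p n)))).
  assert (Hyh : forall n, is_lie d (yh n) /\ forall w, valid d w -> (length w <= N)%nat -> yh n w = Phi (ph p n) w).
  { intros n. unfold yh. destruct (constructive_indefinite_description _ _) as [y Hy]. exact Hy. }
  exists (fun w => lsum (fun n => / INR n * yh n w) (seq 1 N)). split.
  - apply (lie_lsum d (seq 1 N) (fun n w => / INR n * yh n w)). intros n _. apply lie_scal. apply Hyh.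
  - intros w. destruct (Nat.leb (length w) N) eqn:EL.
    + apply Nat.leb_le in EL. destruct (classic (valid d w)) as [Vw|Vw].
      * rewrite (lsum_ext _ (fun n => (if Nat.eqb n (length w) then 1 else 0) * (/ INR n * (INR (length w) * p w)))).
        2:{ intros n Hn. destruct (Hyh n) as [_ H]. rewrite H by auto. rewrite Phi_homog.
            rewrite Nat.eqb_sym. destruct (Nat.eqb n (length w)); [rewrite (Phi_prim d N p Hp w Vw EL)|]; ring. }
        destruct w as [|c w0].
        -- rewrite lsum_zero; auto. intros n Hn. apply in_seq in Hn. simpl. 
           replace (Nat.eqb n 0) with false by (symmetry; apply Nat.eqb_neq; lia). ring.
        -- rewrite lsum_seq_delta by (simpl in *; lia). field. apply not_0_INR. simpl; lia.
      * rewrite Hinv by auto. rewrite lsum_zero; auto. intros n _.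
        rewrite (lie_invalid d (yh n)); [ring|apply Hyh|auto].
    + apply Hlong. apply Nat.leb_gt in EL. lia.
Qed.

Notation Dw := has_deriv_within.

Definition Fx (a b x : R) := within (fun y => a <= y <= b /\ y <> x) (locally x).

Lemma Fx_filter a b x : Filter (Fx a b x).
Proof. unfold Fx. apply within_filter. apply locally_filter. Qed.

Lemma Fx_proper a b x : a < b -> a <= x <= b -> ProperFilter' (Fx a b x).
Proof.
  intros Hab Hx. constructor; [|apply Fx_filter].
  unfold Fx, within. intros [eps He].
  destruct (Rlt_or_le x b) as [Hxb|Hxb].
  - set (y := x + Rmin (eps/2) ((b - x)/2)).
    assert (Hm1 : 0 < Rmin (eps/2) ((b-x)/2)) by (apply Rmin_pos; destruct eps; simpl; lra).
    assert (Hm2 : Rmin (eps/2) ((b-x)/2) <= eps/2) by apply Rmin_l.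
    assert (Hm3 : Rmin (eps/2) ((b-x)/2) <= (b-x)/2) by apply Rmin_r.
    apply (He y). change (Rabs (y - x) < eps). unfold y. rewrite Rabs_pos_eq; destruct eps; simpl in *; lra.
    unfold y; split; [lra|lra].
  - set (y := x - Rmin (eps/2) ((x - a)/2)).
    assert (Hm1 : 0 < Rmin (eps/2) ((x-a)/2)) by (apply Rmin_pos; destruct eps; simpl; lra).
    assert (Hm2 : Rmin (eps/2) ((x-a)/2) <= eps/2) by apply Rmin_l.
    assert (Hm3 : Rmin (eps/2) ((x-a)/2) <= (x-a)/2) by apply Rmin_r.
    apply (He y). change (Rabs (y - x) < eps). unfold y. rewrite Rabs_minus_sym, Rabs_pos_eq; destruct eps; simpl in *; lra.
    unfold y; split; [lra|lra].
Qed.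

Lemma Fx_eps a b x (P : R -> Prop) : Fx a b x P <-> exists d : posreal, forall y, a <= y <= b -> y <> x -> Rabs (y - x) < d -> P y.
Proof.
  unfold Fx, within. split.
  - intros [d Hd]. exists d. intros y H1 H2 H3. apply Hd; auto.
  - intros [d Hd]. exists d. intros y H1 [H2 H3]. apply Hd; auto.
Qed.

Lemma lim_eps {F : (R -> Prop) -> Prop} {FF : Filter F} (f : R -> R) l :
  filterlim f F (locally l) <-> forall eps : posreal, F (fun y => Rabs (f y - l) < eps).
Proof. rewrite (@filterlim_locally R R_UniformSpace F FF f l). split; intros H eps; apply (H eps). Qed.

Lemma Dw_eps a b f x l : Dw a b f x l <->
  forall eps : posreal, exists d : posreal, forall y, a <= y <= b -> y <> x -> Rabs (y - x) < d ->
    Rabs ((f y - f x) / (y - x) - l) < eps.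
Proof.
  unfold has_deriv_within. rewrite (@lim_eps _ (Fx_filter a b x)). split; intros H eps; specialize (H eps).
  - apply Fx_eps in H. exact H.
  - apply Fx_eps. exact H.
Qed.

Lemma lim_plus {F : (R -> Prop) -> Prop} {FF : Filter F} (f g : R -> R) l1 l2 :
  filterlim f F (locally l1) -> filterlim g F (locally l2) -> filterlim (fun y => f y + g y) F (locally (l1 + l2)).
Proof.
  intros H1 H2. apply (filterlim_comp_2 f g (fun u v => plus u v) H1 H2). apply (filterlim_plus l1 l2).
Qed.

Lemma lim_mult {F : (R -> Prop) -> Prop} {FF : Filter F} (f g : R -> R) l1 l2 :
  filterlim f F (locally l1) -> filterlim g F (locally l2) -> filterlim (fun y => f y * g y) F (locally (l1 * l2)).
Proof.
  intros H1 H2. apply (filterlim_comp_2 f g (fun u v => mult u v) H1 H2). apply (filterlim_mult l1 l2).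
Qed.

Lemma lim_const {F : (R -> Prop) -> Prop} {FF : Filter F} (c : R) : filterlim (fun _ => c) F (locally c).
Proof. apply filterlim_const. Qed.

Lemma Fx_id a b x : filterlim (fun y => y) (Fx a b x) (locally x).
Proof.
  apply (@lim_eps _ (Fx_filter a b x)). intros eps. apply Fx_eps. exists eps. intros; auto.
Qed.

Lemma Fx_neq a b x : Fx a b x (fun y => y <> x).
Proof. apply Fx_eps. exists (mkposreal 1 Rlt_0_1). intros; auto. Qed.

Lemma Dw_cont_lim a b f x l : Dw a b f x l -> filterlim f (Fx a b x) (locally (f x)).
Proof.
  intros H. unfold has_deriv_within in H.
  assert (H2 : filterlim (fun y => f x + (f y - f x) / (y - x) * (y - x)) (Fx a b x) (locally (f x + l * (x - x)))).
  { apply (@lim_plus _ (Fx_filter a b x)). apply (@lim_const _ (Fx_filter a b x)).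
    apply (@lim_mult _ (Fx_filter a b x)). exact H.
    apply (@lim_plus _ (Fx_filter a b x)). apply Fx_id. apply (@lim_const _ (Fx_filter a b x)). }
  replace (f x + l * (x - x)) with (f x) in H2 by ring.
  apply (@filterlim_ext_loc _ _ _ _ (Fx_filter a b x)) with (2 := H2).
  generalize (Fx_neq a b x). apply (@filter_imp _ _ (Fx_filter a b x)). intros y Hy. field. lra.
Qed.

Definition cwithin (a b : R) (f : R -> R) (x : R) : Prop :=
  forall eps : posreal, exists d : posreal, forall y, a <= y <= b -> Rabs (y - x) < d -> Rabs (f y - f x) < eps.

Lemma Dw_cwithin a b f x l : Dw a b f x l -> cwithin a b f x.
Proof.
  intros H eps. apply Dw_cont_lim in H. pose proof (proj1 (@lim_eps _ (Fx_filter a b x) f (f x)) H eps) as H'.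
  clear H; rename H' into H. apply Fx_eps in H. destruct H as [d Hd]. exists d. intros y Hy Hyd.
  destruct (Req_dec y x) as [->|Hne]. { rewrite Rminus_diag, Rabs_R0. apply cond_pos. }
  apply Hd; auto.
Qed.

Lemma Dw_unique a b f x l1 l2 : a < b -> a <= x <= b -> Dw a b f x l1 -> Dw a b f x l2 -> l1 = l2.
Proof.
  intros Hab Hx H1 H2. apply (@filterlim_locally_unique R R_AbsRing R_NormedModule (Fx a b x) (Fx_proper a b x Hab Hx) _ l1 l2 H1 H2).
Qed.

Lemma Dw_ext_loc a b f g x l (d : posreal) :
  (forall y, a <= y <= b -> Rabs (y - x) < d -> f y = g y) -> f x = g x -> Dw a b f x l -> Dw a b g x l.
Proof.
  intros Hfg Hx H. unfold has_deriv_within in *.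
  apply (@filterlim_ext_loc _ _ _ _ (Fx_filter a b x)) with (2 := H).
  apply Fx_eps. exists d. intros y Hy Hne Hd. rewrite Hfg, Hx; auto.
Qed.

Lemma Dw_ext a b f g x l : a <= x <= b ->
  (forall y, a <= y <= b -> f y = g y) -> Dw a b f x l -> Dw a b g x l.
Proof.
  intros Hx Hfg. apply (Dw_ext_loc a b f g x l (mkposreal 1 Rlt_0_1)); auto.
Qed.

Lemma Dw_const a b c x : Dw a b (fun _ => c) x 0.
Proof.
  unfold has_deriv_within. apply (@filterlim_ext _ _ _ _ (Fx_filter a b x)) with (f := fun _ => 0).
  intros y. unfold Rdiv. ring. apply (@lim_const _ (Fx_filter a b x)).
Qed.

Lemma Dw_plus a b f g x lf lg : Dw a b f x lf -> Dw a b g x lg -> Dw a b (fun y => f y + g y) x (lf + lg).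
Proof.
  intros H1 H2. unfold has_deriv_within in *.
  apply (@filterlim_ext _ _ _ _ (Fx_filter a b x)) with (f := fun y => (f y - f x) / (y - x) + (g y - g x) / (y - x)).
  intros y. unfold Rdiv. ring. apply (@lim_plus _ (Fx_filter a b x)); auto.
Qed.

Lemma Dw_scal a b c f x l : Dw a b f x l -> Dw a b (fun y => c * f y) x (c * l).
Proof.
  intros H. unfold has_deriv_within in *.
  apply (@filterlim_ext _ _ _ _ (Fx_filter a b x)) with (f := fun y => c * ((f y - f x) / (y - x))).
  intros y. unfold Rdiv. ring. apply (@lim_mult _ (Fx_filter a b x)); auto. apply (@lim_const _ (Fx_filter a b x)).
Qed.

Lemma Dw_minus a b f g x lf lg : Dw a b f x lf -> Dw a b g x lg -> Dw a b (fun y => f y - g y) x (lf - lg).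
Proof.
  intros H1 H2. apply (Dw_scal a b (-1)) in H2.
  apply (Dw_plus a b _ _ x _ _ H1) in H2. unfold has_deriv_within in *.
  replace (lf - lg) with (lf + -1 * lg) by ring.
  apply (@filterlim_ext _ _ _ _ (Fx_filter a b x)) with (2 := H2). intros y. unfold Rdiv. ring.
Qed.

Lemma Dw_mult a b f g x lf lg : Dw a b f x lf -> Dw a b g x lg -> Dw a b (fun y => f y * g y) x (lf * g x + f x * lg).
Proof.
  intros H1 H2. pose proof (Dw_cont_lim _ _ _ _ _ H2) as Cg. unfold has_deriv_within in *.
  apply (@filterlim_ext_loc _ _ _ _ (Fx_filter a b x)) with (f := fun y => (f y - f x) / (y - x) * g y + f x * ((g y - g x) / (y - x))).
  - generalize (Fx_neq a b x). apply (@filter_imp _ _ (Fx_filter a b x)). intros y Hy. field. lra.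
  - apply (@lim_plus _ (Fx_filter a b x)); apply (@lim_mult _ (Fx_filter a b x)); auto.
    apply (@lim_const _ (Fx_filter a b x)).
Qed.

Lemma Dw_lsum {A : Type} a b (F : A -> R -> R) (G : A -> R) x (l : list A) :
  (forall i, In i l -> Dw a b (F i) x (G i)) ->
  Dw a b (fun y => fold_right (fun i acc => F i y + acc) 0 l) x (fold_right (fun i acc => G i + acc) 0 l).
Proof.
  induction l as [|i l IH]; intros H; simpl.
  - apply Dw_const.
  - apply Dw_plus. apply H; left; auto. apply IH. intros; apply H; right; auto.
Qed.

Lemma is_derive_Dw a b f x l : is_derive f x l -> Dw a b f x l.
Proof.
  intros H. apply is_derive_Reals in H. apply Dw_eps. intros eps. destruct (H eps (cond_pos eps)) as [d Hd].
  exists d. intros y _ Hne Hyd. replace y with (x + (y - x)) at 1 by ring.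
  apply Hd; auto. lra.
Qed.

Lemma Dw_is_derive a b f x l : a < x < b -> Dw a b f x l -> is_derive f x l.
Proof.
  intros Hx H. apply is_derive_Reals. intros eps Heps. pose proof (proj1 (Dw_eps a b f x l) H) as H'. clear H; rename H' into H.
  destruct (H (mkposreal eps Heps)) as [d Hd].
  assert (Hm : 0 < Rmin d (Rmin (x - a) (b - x))) by (apply Rmin_pos; [apply cond_pos|apply Rmin_pos; lra]).
  exists (mkposreal _ Hm). intros h Hh Hhd. simpl in Hhd.
  assert (H1 := Rmin_l d (Rmin (x - a) (b - x))). assert (H2 := Rmin_r d (Rmin (x - a) (b - x))).
  assert (H3 := Rmin_l (x - a) (b - x)). assert (H4 := Rmin_r (x - a) (b - x)).
  assert (Hh' := Rabs_def2 _ _ Hhd).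
  assert (E : x + h - x = h) by ring. specialize (Hd (x + h)). rewrite E in Hd. apply Hd.
  - split; lra.
  - lra.
  - lra.
Qed.

Lemma Dw_lsum' {A : Type} a b (F : A -> R -> R) (G : A -> R) x (l : list A) :
  (forall i, In i l -> Dw a b (F i) x (G i)) ->
  Dw a b (fun y => lsum (fun i => F i y) l) x (lsum G l).
Proof.
  induction l as [|i l IH]; intros H; simpl.
  - apply Dw_const.
  - apply Dw_plus. apply H; left; auto. apply IH. intros; apply H; right; auto.
Qed.

Definition clamp (s t y : R) : R := Rmax s (Rmin t y).

Lemma clamp_in s t y : s <= t -> s <= clamp s t y <= t.
Proof. intros H. unfold clamp, Rmax, Rmin. repeat destruct Rle_dec; lra. Qed.

Lemma clamp_id s t y : s <= y <= t -> clamp s t y = y.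
Proof. intros H. unfold clamp, Rmax, Rmin. repeat destruct Rle_dec; lra. Qed.

Lemma clamp_lip s t y z : s <= t -> Rabs (clamp s t y - clamp s t z) <= Rabs (y - z).
Proof. intros H. unfold clamp, Rmax, Rmin. repeat destruct Rle_dec; unfold Rabs; repeat destruct Rcase_abs; lra. Qed.

Lemma cwithin_clamp a b f s t : a <= s -> s <= t -> t <= b ->
  (forall y, s <= y <= t -> cwithin a b f y) -> forall z, continuity_pt (fun y => f (clamp s t y)) z.
Proof.
  intros Has Hst Htb H z. apply continuity_pt_filterlim. apply (proj2 (@lim_eps _ (@filter_filter _ _ (locally_filter z)) _ _)).
  intros eps. assert (Hc := clamp_in s t z Hst). destruct (H _ Hc eps) as [d Hd].
  exists d. intros y Hy. change (Rabs (y - z) < d) in Hy. apply Hd.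
  - assert (H2 := clamp_in s t y Hst). lra.
  - eapply Rle_lt_trans; [apply clamp_lip; auto|auto].
Qed.

Lemma Dw_zero_const a b f s t : a <= s -> s <= t -> t <= b ->
  (forall y, s <= y <= t -> exists l, Dw a b f y l) ->
  (forall y, s < y < t -> Dw a b f y 0) -> f t = f s.
Proof.
  intros Has Hst Htb Hex H0. destruct (Req_dec s t) as [->|Hne]; auto.
  assert (Hlt : s < t) by lra.
  assert (Hc : forall z, continuity_pt (fun y => f (clamp s t y)) z).
  { apply (cwithin_clamp a b); auto. intros y Hy. destruct (Hex y Hy) as [l Hl]. apply (Dw_cwithin _ _ _ _ _ Hl). }
  destruct (MVT_gen (fun y => f (clamp s t y)) s t (fun _ => 0)) as [c [_ Hc2]].
  - intros x Hx. rewrite Rmin_left, Rmax_right in Hx by lra.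
    apply (is_derive_ext_loc f). 
    + assert (Hm : 0 < Rmin (x - s) (t - x)) by (apply Rmin_pos; lra).
      exists (mkposreal _ Hm). intros y Hy. change (Rabs (y - x) < Rmin (x - s) (t - x)) in Hy.
      assert (H1 := Rmin_l (x - s) (t - x)). assert (H2 := Rmin_r (x - s) (t - x)).
      apply Rabs_def2 in Hy. rewrite clamp_id; auto. lra.
    + apply (Dw_is_derive a b). lra. apply H0. lra.
  - intros x _. apply Hc.
  - rewrite !clamp_id in Hc2 by lra. lra.
Qed.

Lemma Dw_zero_const' a b f s t : a <= s -> s <= t -> t <= b ->
  (forall y, s <= y <= t -> exists l, Dw a b f y l) ->
  (forall y, s < y < t -> Dw a b f y 0) -> forall y, s <= y <= t -> f y = f s.
Proof.
  intros Has Hst Htb Hex H0 y Hy. apply (Dw_zero_const a b f s y); try lra.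
  - intros z Hz. apply Hex. lra.
  - intros z Hz. apply H0. lra.
Qed.

Lemma is_derive_cont f x l : is_derive f x l -> continuity_pt f x.
Proof.
  intros H. apply continuity_pt_filterlim. apply (@ex_derive_continuous R_AbsRing R_NormedModule f x).
  exists l. exact H.
Qed.

Lemma ftc (g : R -> R) s : (forall z, continuity_pt g z) -> forall t, is_derive (fun t => RInt g s t) t (g t).
Proof.
  intros Hg t. apply (is_derive_RInt g (fun t => RInt g s t) s t).
  - apply filter_forall. intros x. apply (@RInt_correct R_CompleteNormedModule). apply (@ex_RInt_continuous R_CompleteNormedModule).
    intros z _. apply continuity_pt_filterlim. apply Hg.
  - apply continuity_pt_filterlim. apply Hg.
Qed.

Lemma continuity_lsum {A : Type} (F : A -> R -> R) (l : list A) x :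
  (forall i, In i l -> continuity_pt (F i) x) -> continuity_pt (fun y => lsum (fun i => F i y) l) x.
Proof.
  induction l as [|i l IH]; intros H; simpl.
  - apply continuity_pt_const. intros u v; reflexivity.
  - apply (continuity_pt_plus (F i) (fun y => lsum (fun i => F i y) l)). apply H; left; auto.
    apply IH. intros; apply H; right; auto.
Qed.

Definition Cn (a b : R) (n : nat) (f : R -> R) : Prop :=
  exists F : nat -> R -> R, (forall x, a <= x <= b -> F O x = f x) /\
    forall k x, (k < n)%nat -> a <= x <= b -> Dw a b (F k) x (F (S k) x).

Definition Sm a b f := forall n, Cn a b n f.

Lemma Cn_ext a b n f g : (forall x, a <= x <= b -> f x = g x) -> Cn a b n f -> Cn a b n g.
Proof. intros H [F [H0 H1]]. exists F. split; auto. intros x Hx. rewrite H0, H; auto. Qed.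

Lemma Cn_intro a b n f g : (forall x, a <= x <= b -> Dw a b f x (g x)) -> Cn a b n g -> Cn a b (S n) f.
Proof.
  intros Hd [G [G0 G1]]. exists (fun k => match k with O => f | S k' => G k' end). split; auto.
  intros [|k] x Hk Hx.
  - rewrite G0; auto.
  - apply G1; auto. lia.
Qed.

Lemma Cn_elim a b n f : Cn a b (S n) f -> exists g, (forall x, a <= x <= b -> Dw a b f x (g x)) /\ Cn a b n g.
Proof.
  intros [F [F0 F1]]. exists (F 1%nat). split.
  - intros x Hx. apply (Dw_ext a b (F O)); auto. apply F1; auto; lia.
  - exists (fun k => F (S k)). split; auto. intros k x Hk Hx. apply F1; auto; lia.
Qed.

Lemma Cn_le a b n f : Cn a b (S n) f -> Cn a b n f.
Proof. intros [F [F0 F1]]. exists F. split; auto. Qed.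

Lemma Cn_const a b n c : Cn a b n (fun _ => c).
Proof.
  exists (fun k => match k with O => fun _ => c | _ => fun _ => 0 end). split; auto.
  intros [|k] x _ _; apply Dw_const.
Qed.

Lemma Cn_plus a b n f g : Cn a b n f -> Cn a b n g -> Cn a b n (fun y => f y + g y).
Proof.
  intros [F [F0 F1]] [G [G0 G1]]. exists (fun k y => F k y + G k y). split.
  - intros x Hx. rewrite F0, G0; auto.
  - intros k x Hk Hx. apply Dw_plus; auto.
Qed.

Lemma Cn_scal a b n c f : Cn a b n f -> Cn a b n (fun y => c * f y).
Proof.
  intros [F [F0 F1]]. exists (fun k y => c * F k y). split.
  - intros x Hx. rewrite F0; auto.
  - intros k x Hk Hx. apply Dw_scal; auto.
Qed.

Lemma Cn_minus a b n f g : Cn a b n f -> Cn a b n g -> Cn a b n (fun y => f y - g y).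
Proof.
  intros Hf Hg. apply (Cn_ext a b n (fun y => f y + -1 * g y)). intros; ring.
  apply Cn_plus; auto. apply Cn_scal; auto.
Qed.

Lemma Cn_mult a b n : forall f g, Cn a b n f -> Cn a b n g -> Cn a b n (fun y => f y * g y).
Proof.
  induction n as [|n IH]; intros f g Hf Hg.
  - exists (fun _ y => f y * g y). split; auto. intros; lia.
  - destruct (Cn_elim _ _ _ _ Hf) as [f' [Df Cf']]. destruct (Cn_elim _ _ _ _ Hg) as [g' [Dg Cg']].
    apply (Cn_intro a b n _ (fun y => f' y * g y + f y * g' y)).
    + intros x Hx. apply Dw_mult; auto.
    + apply Cn_plus; apply IH; auto; apply Cn_le; auto.
Qed.

Lemma Cn_lsum {A : Type} a b n (F : A -> R -> R) (l : list A) :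
  (forall i, In i l -> Cn a b n (F i)) -> Cn a b n (fun y => lsum (fun i => F i y) l).
Proof.
  induction l as [|i l IH]; intros H; simpl.
  - apply Cn_const.
  - apply Cn_plus. apply H; left; auto. apply IH. intros; apply H; right; auto.
Qed.

Lemma Sm_ext a b f g : (forall x, a <= x <= b -> f x = g x) -> Sm a b f -> Sm a b g.
Proof. intros H Hf n. apply (Cn_ext a b n f); auto. Qed.
Lemma Sm_const a b c : Sm a b (fun _ => c).
Proof. intros n; apply Cn_const. Qed.
Lemma Sm_plus a b f g : Sm a b f -> Sm a b g -> Sm a b (fun y => f y + g y).
Proof. intros Hf Hg n; apply Cn_plus; auto. Qed.
Lemma Sm_minus a b f g : Sm a b f -> Sm a b g -> Sm a b (fun y => f y - g y).
Proof. intros Hf Hg n; apply Cn_minus; auto. Qed.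
Lemma Sm_mult a b f g : Sm a b f -> Sm a b g -> Sm a b (fun y => f y * g y).
Proof. intros Hf Hg n; apply Cn_mult; auto. Qed.
Lemma Sm_lsum {A : Type} a b (F : A -> R -> R) (l : list A) :
  (forall i, In i l -> Sm a b (F i)) -> Sm a b (fun y => lsum (fun i => F i y) l).
Proof. intros H n. apply Cn_lsum. intros; apply H; auto. Qed.

Lemma Sm_deriv a b f : Sm a b f -> exists g, (forall x, a <= x <= b -> Dw a b f x (g x)).
Proof. intros H. destruct (Cn_elim a b O f (H 1%nat)) as [g [Hg _]]. exists g; auto. Qed.

Lemma smooth_Sm a b f : smooth_on a b f -> Sm a b f.
Proof. intros [F [F0 F1]] n. exists F. split; auto. Qed.

Lemma smooth_deriv a b f : smooth_on a b f -> exists g, Sm a b g /\ forall x, a <= x <= b -> Dw a b f x (g x).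
Proof.
  intros [F [F0 F1]]. exists (F 1%nat). split.
  - intros n. exists (fun k => F (S k)). split; auto.
  - intros x Hx. apply (Dw_ext a b (F O)); auto.
Qed.

Lemma Cn_agree a b n m f F G : a < b ->
  (forall x, a <= x <= b -> F O x = f x) -> (forall k x, (k < n)%nat -> a <= x <= b -> Dw a b (F k) x (F (S k) x)) ->
  (forall x, a <= x <= b -> G O x = f x) -> (forall k x, (k < m)%nat -> a <= x <= b -> Dw a b (G k) x (G (S k) x)) ->
  forall k, (k <= n)%nat -> (k <= m)%nat -> forall x, a <= x <= b -> F k x = G k x.
Proof.
  intros Hab F0 F1 G0 G1. induction k as [|k IH]; intros Hn Hm x Hx.
  - rewrite F0, G0; auto.
  - apply (Dw_unique a b (F k) x _ _ Hab Hx).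
    + apply F1; auto; lia.
    + apply (Dw_ext a b (G k) (F k) x _ Hx).
      * intros y Hy; symmetry; apply IH; auto; lia.
      * apply G1; auto; lia.
Qed.

Lemma Sm_smooth a b f : a < b -> Sm a b f -> smooth_on a b f.
Proof.
  intros Hab H.
  pose (Fn := fun n => proj1_sig (constructive_indefinite_description _ (H n))).
  assert (HF : forall n, (forall x, a <= x <= b -> Fn n O x = f x) /\
     forall k x, (k < n)%nat -> a <= x <= b -> Dw a b (Fn n k) x (Fn n (S k) x)).
  { intros n. unfold Fn. destruct (constructive_indefinite_description _ _) as [F HF]. exact HF. }
  exists (fun k => Fn (S k) k). split.
  - intros x Hx. apply (proj1 (HF 1%nat)); auto.
  - intros k x Hx. destruct (HF (S k)) as [A0 A1]. destruct (HF (S (S k))) as [B0 B1].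
    rewrite <- (Cn_agree a b (S k) (S (S k)) f (Fn (S k)) (Fn (S (S k))) Hab A0 A1 B0 B1 (S k)) by (auto; lia).
    apply A1; auto.
Qed.

Lemma splits_props d w p q : In (p, q) (splits w) -> valid d w ->
  valid d p /\ valid d q /\ (length p + length q = length w)%nat.
Proof.
  intros Hin Vw. apply splits_app in Hin. subst. apply Forall_app in Vw. rewrite length_app. tauto.
Qed.

Lemma lsum_splits_last (F : word -> R) w :
  lsum (fun pq : word * word => match snd pq with [] => F (fst pq) | _ => 0 end) (splits w) = F w.
Proof.
  destruct (snoc_case w) as [->|[w' [c ->]]].
  - rewrite lsum_splits_nil. reflexivity.
  - rewrite lsum_splits_snoc. cbn [fst snd]. rewrite lsum_zero. ring.
    intros [p q] _. cbn [snd]. destruct q; reflexivity.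
Qed.

Lemma lsum_splits_first (F : word -> R) w :
  lsum (fun pq : word * word => match fst pq with [] => F (snd pq) | _ => 0 end) (splits w) = F w.
Proof.
  destruct w as [|c w'].
  - rewrite lsum_splits_nil. reflexivity.
  - rewrite lsum_splits_cons. cbn [fst snd]. rewrite lsum_zero. ring.
    intros [p q] _. reflexivity.
Qed.

Definition IT (T s : R) := 0 <= s <= T.

Lemma gl_unit d T K (Z : gpath) :
  (exists s0 t0 w0, in_I T s0 /\ in_I T t0 /\ valid d w0 /\ (length w0 <= K)%nat /\ Z s0 t0 w0 <> 0) ->
  (forall s t v w, in_I T s -> in_I T t -> valid d v -> valid d w -> (length v + length w <= K)%nat ->
     pair_list (Z s t) (shuffle v w) = Z s t v * Z s t w) ->
  (forall s u t w, in_I T s -> in_I T u -> in_I T t -> valid d w -> (length w <= K)%nat ->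
     conc (Z s u) (Z u t) w = Z s t w) ->
  forall s t, in_I T s -> in_I T t -> Z s t [] = 1.
Proof.
  intros [s0 [t0 [w0 [Hs0 [Ht0 [Vw0 [Lw0 Hne]]]]]]] Hsh Hch s t Hs Ht.
  assert (Vnil : valid d []) by constructor.
  assert (Idem : forall s t, in_I T s -> in_I T t -> Z s t [] * Z s t [] = Z s t []).
  { intros s' t' Hs' Ht'. rewrite <- Hsh by (auto; simpl; lia). rewrite shuffle_nil_l. simpl. ring. }
  assert (H1 : Z s0 t0 [] = 1).
  { assert (E := Hsh s0 t0 w0 [] Hs0 Ht0 Vw0 Vnil). rewrite shuffle_nil_r in E. simpl in E.
    rewrite Nat.add_0_r in E. specialize (E Lw0).
    apply (Rmult_eq_reg_l (Z s0 t0 w0)); auto. lra. }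
  assert (Hch0 : forall s u t, in_I T s -> in_I T u -> in_I T t -> Z s u [] * Z u t [] = Z s t []).
  { intros. rewrite <- conc_nil. apply Hch; auto; simpl; lia. }
  assert (H2 : forall u, in_I T u -> Z u t0 [] = 1).
  { intros u Hu. assert (E := Hch0 s0 u t0 Hs0 Hu Ht0). rewrite H1 in E.
    assert (E2 := Idem u t0 Hu Ht0).
    destruct (Req_dec (Z u t0 []) 0) as [Z0|Z0]. { rewrite Z0 in E. lra. }
    apply (Rmult_eq_reg_l (Z u t0 [])); auto. lra. }
  assert (E := Hch0 s t t0 Hs Ht Ht0). rewrite !H2 in E by auto. lra.
Qed.

Lemma gl_diag d T K (Z : gpath) :
  (forall s t, in_I T s -> in_I T t -> Z s t [] = 1) ->
  (forall s u t w, in_I T s -> in_I T u -> in_I T t -> valid d w -> (length w <= K)%nat ->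
     conc (Z s u) (Z u t) w = Z s t w) ->
  forall s w, in_I T s -> valid d w -> (length w <= K)%nat -> Z s s w = e0 w.
Proof.
  intros Hu Hch s w Hs. remember (length w) as n eqn:En. revert w En.
  induction n as [n IH] using lt_wf_ind. intros w En Vw Lw. rewrite En in Lw.
  destruct w as [|c w']. { simpl. apply Hu; auto. }
  simpl. assert (E := Hch s s s (c :: w') Hs Hs Hs Vw Lw).
  rewrite conc_cons, Hu, conc_splits in E by auto.
  rewrite (lsum_ext _ (fun pq : word * word => match snd pq with [] => Z s s (c :: fst pq) | _ => 0 end)) in E.
  - rewrite (lsum_splits_last (fun p => Z s s (c :: p))) in E. lra.
  - intros [p q] Hin. cbn [fst snd]. apply splits_app in Hin. subst w'. destruct q as [|b q].
    + rewrite Hu by auto. rewrite ?app_nil_r. ring.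
    + replace (Z s s (c :: p)) with (e0 (c :: p)). simpl. ring.
      symmetry. apply (IH (length (c :: p))); auto.
      * simpl in En. rewrite length_app in En. simpl in *. lia.
      * inversion Vw; subst. apply Forall_app in H2. constructor; tauto.
      * simpl in *. rewrite length_app in Lw. lia.
Qed.

Lemma Dw_conc_r a b (A : series) (Bf : R -> series) (l : series) y w d :
  valid d w ->
  (forall q, valid d q -> (length q <= length w)%nat -> Dw a b (fun r => Bf r q) y (l q)) ->
  Dw a b (fun r => conc A (Bf r) w) y (conc A l w).
Proof.
  intros Vw H. rewrite conc_splits.
  apply (Dw_ext_loc a b (fun r => lsum (fun pq : word * word => A (fst pq) * Bf r (snd pq)) (splits w)) _ y _ (mkposreal 1 Rlt_0_1)).
  - intros; rewrite conc_splits; auto.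
  - rewrite conc_splits; auto.
  - apply (Dw_lsum' a b (fun pq r => A (fst pq) * Bf r (snd pq))). intros [p q] Hin.
    destruct (splits_props d w p q Hin Vw) as [_ [Vq Lq]]. apply Dw_scal. apply H; auto. cbn. lia.
Qed.

Lemma chen_deriv d T (Z : gpath) s y w (l : series) :
  in_I T y -> valid d w ->
  (forall r, in_I T r -> Z s r w = conc (Z s y) (Z y r) w) ->
  (forall q, valid d q -> (length q <= length w)%nat -> Dw 0 T (fun r => Z y r q) y (l q)) ->
  Dw 0 T (fun r => Z s r w) y (conc (Z s y) l w).
Proof.
  intros Hy Vw Hc Hd. apply (Dw_ext 0 T (fun r => conc (Z s y) (Z y r) w)); auto.
  - intros r Hr. symmetry. apply Hc. exact Hr.
  - apply (Dw_conc_r 0 T (Z s y) (fun r => Z y r) l y w d); auto.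
Qed.

Lemma ode_uniq d T K (Z1 Z2 : R -> series) (l : R -> series) s t t0 :
  0 <= s -> s <= t -> t <= T -> s <= t0 <= t ->
  (forall y w, s <= y <= t -> valid d w -> (length w <= K)%nat -> exists m, Dw 0 T (fun r => Z1 r w) y m) ->
  (forall y w, s <= y <= t -> valid d w -> (length w <= K)%nat -> exists m, Dw 0 T (fun r => Z2 r w) y m) ->
  (forall y w, s < y < t -> valid d w -> (length w <= K)%nat -> Dw 0 T (fun r => Z1 r w) y (conc (Z1 y) (l y) w)) ->
  (forall y w, s < y < t -> valid d w -> (length w <= K)%nat -> Dw 0 T (fun r => Z2 r w) y (conc (Z2 y) (l y) w)) ->
  (forall y, s < y < t -> l y [] = 0) ->
  (forall w, valid d w -> (length w <= K)%nat -> Z1 t0 w = Z2 t0 w) ->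
  forall y w, s <= y <= t -> valid d w -> (length w <= K)%nat -> Z1 y w = Z2 y w.
Proof.
  intros H0s Hst HtT Ht0 E1 E2 D1 D2 Hl0 Hinit y w Hy Vw Lw.
  remember (length w) as n eqn:En. revert y w Hy En Vw Lw.
  induction n as [n IH] using lt_wf_ind. intros y w Hy En Vw Lw.
  assert (Hc : forall r, s <= r <= t -> Z1 r w - Z2 r w = Z1 s w - Z2 s w).
  { apply (Dw_zero_const' 0 T (fun r => Z1 r w - Z2 r w) s t); auto.
    - intros r Hr. destruct (E1 r w Hr Vw (ltac:(lia))) as [m1 H1]. destruct (E2 r w Hr Vw (ltac:(lia))) as [m2 H2].
      exists (m1 - m2). apply Dw_minus; auto.
    - intros r Hr. assert (HD := Dw_minus _ _ _ _ _ _ _ (D1 r w Hr Vw (ltac:(lia))) (D2 r w Hr Vw (ltac:(lia)))).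
      replace (conc (Z1 r) (l r) w - conc (Z2 r) (l r) w) with 0 in HD; auto.
      rewrite !conc_splits, <- lsum_minus. symmetry. apply lsum_zero. intros [p q] Hin.
      destruct (splits_props d w p q Hin Vw) as [Vp [Vq Lpq]]. cbn [fst snd].
      destruct q as [|b q].
      + rewrite Hl0 by auto. ring.
      + rewrite (IH (length p)); [ring| |auto|auto|auto|]; simpl in Lpq; try lia. lra. }
  assert (E := Hc y Hy). assert (E0 := Hc t0 Ht0). rewrite Hinit in E0 by (auto; lia). lra.
Qed.

Definition valid_b (d : nat) (w : word) : bool := forallb (fun i => andb (Nat.leb 1 i) (Nat.leb i d)) w.

Lemma valid_b_spec d w : valid_b d w = true <-> valid d w.
Proof.
  unfold valid_b, valid. rewrite forallb_forall, Forall_forall. split; intros H x Hx; specialize (H x Hx).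
  - apply Bool.andb_true_iff in H. destruct H as [H1 H2]. apply Nat.leb_le in H1, H2. lia.
  - apply Bool.andb_true_iff. split; apply Nat.leb_le; lia.
Qed.

Definition dval (T : R) (f : R -> R) (x : R) : R := epsilon (inhabits 0) (fun l => Dw 0 T f x l).

Lemma dval_spec T f x l : Dw 0 T f x l -> Dw 0 T f x (dval T f x).
Proof. intros H. unfold dval. apply epsilon_spec. exists l; auto. Qed.

Definition Ld (d : nat) (T : R) (N : nat) (Y : gpath) (u : R) : series :=
  fun w => if andb (valid_b d w) (Nat.leb (length w) N) then dval T (fun t => Y u t w) u else 0.

Lemma Y_unit d T N Y : N_sgrm d T N Y -> forall s t, in_I T s -> in_I T t -> Y s t [] = 1.
Proof. intros [H1 [H2 [H3 _]]]. apply (gl_unit d T N Y); auto. Qed.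

Lemma Y_diag d T N Y : N_sgrm d T N Y -> forall s w, in_I T s -> valid d w -> (length w <= N)%nat -> Y s s w = e0 w.
Proof. intros HY. apply (gl_diag d T N Y). apply (Y_unit d T N Y HY). apply HY. Qed.

Lemma Ld_inv d T N Y u w : ~ valid d w -> Ld d T N Y u w = 0.
Proof.
  intros H. unfold Ld. destruct (valid_b d w) eqn:E; [apply valid_b_spec in E; tauto|reflexivity].
Qed.

Lemma Ld_long d T N Y u w : (N < length w)%nat -> Ld d T N Y u w = 0.
Proof.
  intros H. unfold Ld. replace (Nat.leb (length w) N) with false by (symmetry; apply Nat.leb_gt; lia).
  rewrite Bool.andb_false_r. reflexivity.
Qed.

Lemma Ld_spec d T N Y : N_sgrm d T N Y -> forall u w, in_I T u -> valid d w -> (length w <= N)%nat ->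
  Dw 0 T (fun t => Y u t w) u (Ld d T N Y u w).
Proof.
  intros HY u w Hu Vw Lw. unfold Ld.
  replace (valid_b d w) with true by (symmetry; apply valid_b_spec; auto).
  replace (Nat.leb (length w) N) with true by (symmetry; apply Nat.leb_le; auto). simpl.
  destruct HY as [_ [_ [_ Hsm]]]. destruct (smooth_deriv 0 T _ (Hsm u w Hu Vw Lw)) as [g [_ Hg]].
  apply (dval_spec _ _ _ _ (Hg u Hu)).
Qed.

Lemma Ld_nil d T N Y : 0 < T -> N_sgrm d T N Y -> forall u, in_I T u -> Ld d T N Y u [] = 0.
Proof.
  intros HT HY u Hu. apply (Dw_unique 0 T (fun t => Y u t []) u); auto.
  - apply (Ld_spec d T N Y HY); auto. constructor. simpl; lia.
  - apply (Dw_ext 0 T (fun _ => 1)); auto. intros; symmetry; apply (Y_unit d T N Y HY); auto.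
    apply Dw_const.
Qed.

Lemma Y_ode d T N Y : N_sgrm d T N Y -> forall s t w, in_I T s -> in_I T t -> valid d w -> (length w <= N)%nat ->
  Dw 0 T (fun r => Y s r w) t (conc (Y s t) (Ld d T N Y t) w).
Proof.
  intros HY s t w Hs Ht Vw Lw. apply (chen_deriv d T Y s t w); auto.
  - intros r Hr. symmetry. apply HY; auto.
  - intros q Vq Lq. apply (Ld_spec d T N Y HY); auto. lia.
Qed.

Lemma Ld_prim d T N Y : 0 < T -> N_sgrm d T N Y -> forall u, in_I T u -> primitive d N (Ld d T N Y u).
Proof.
  intros HT HY u Hu a b Va Vb Na Nb Lab.
  assert (Hsh : forall t, in_I T t -> lsum (Y u t) (shuffle a b) = Y u t a * Y u t b).
  { intros t Ht. rewrite <- pl_lsum. apply HY; auto. }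
  rewrite PL_lsum.
  apply (Dw_unique 0 T (fun t => lsum (Y u t) (shuffle a b)) u); auto.
  - apply (Dw_lsum' 0 T (fun z t => Y u t z)). intros z Hz.
    apply (Ld_spec d T N Y HY); auto.
    + apply (shuffle_Forall _ a b z Va Vb Hz).
    + rewrite (shuffle_len a b z Hz). auto.
  - apply (Dw_ext 0 T (fun t => Y u t a * Y u t b)); auto.
    + intros; symmetry; apply Hsh; auto.
    + assert (HD := Dw_mult 0 T _ _ u _ _ (Ld_spec d T N Y HY u a Hu Va (ltac:(lia))) (Ld_spec d T N Y HY u b Hu Vb (ltac:(lia)))).
      assert (E : Ld d T N Y u a * Y u u b + Y u u a * Ld d T N Y u b = 0).
      { rewrite !(Y_diag d T N Y HY) by (auto; lia).
        destruct a; [congruence|]. destruct b; [congruence|]. simpl. ring. }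
      cbv beta in HD. rewrite E in HD. exact HD.
Qed.

Lemma Ld_smooth d T N Y : 0 < T -> N_sgrm d T N Y -> forall w, Sm 0 T (fun u => Ld d T N Y u w).
Proof.
  intros HT HY w. destruct (classic (valid d w /\ (length w <= N)%nat)) as [[Vw Lw]|Hn].
  2:{ apply (Sm_ext 0 T (fun _ => 0)); [|apply Sm_const]. intros x _. symmetry.
      destruct (classic (valid d w)) as [V|V]. apply Ld_long. destruct (Nat.le_gt_cases (length w) N); [exfalso; apply Hn; auto|lia]. apply Ld_inv; auto. }
  remember (length w) as n eqn:En. revert w En Vw Lw.
  induction n as [n IH] using lt_wf_ind. intros w En Vw Lw.
  destruct HY as [H1 [H2 [H3 Hsm]]] eqn:EHY.
  assert (H0T : in_I T 0) by (unfold in_I; lra).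
  destruct (smooth_deriv 0 T _ (Hsm 0 w H0T Vw (ltac:(lia)))) as [G [SG DG]].
  destruct w as [|c w'].
  { apply (Sm_ext 0 T (fun _ => 0)); [|apply Sm_const]. intros x Hx. symmetry. apply Ld_nil; auto. }
  apply (Sm_ext 0 T (fun u => G u - lsum (fun pq : word * word => Y 0 u (c :: fst pq) * Ld d T N Y u (snd pq)) (splits w'))).
  - intros u Hu. assert (E : G u = conc (Y 0 u) (Ld d T N Y u) (c :: w')).
    { apply (Dw_unique 0 T (fun t => Y 0 t (c :: w')) u); auto. apply (Y_ode d T N Y HY); auto. lia. }
    rewrite E, conc_cons, (Y_unit d T N Y HY) by auto. rewrite conc_splits. ring.
  - apply Sm_minus; auto. apply (Sm_lsum 0 T (fun pq u => Y 0 u (c :: fst pq) * Ld d T N Y u (snd pq))).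
    intros [p q] Hin. cbn [fst snd]. assert (Vw' : valid d w') by (inversion Vw; auto).
    destruct (splits_props d w' p q Hin Vw') as [Vp [Vq Lpq]].
    apply Sm_mult.
    + apply smooth_Sm. apply Hsm; auto. inversion Vw; constructor; auto. simpl in *; lia.
    + apply (IH (length q)); auto; simpl in *; lia.
Qed.

Fixpoint Xf (L : R -> series) (n : nat) (s t : R) (w : word) : R :=
  match n with
  | O => e0 w
  | S n' => match w with
            | [] => 1
            | _ :: _ => RInt (fun u => lsum (fun k => Xf L n' s u (firstn k w) * L u (skipn k w)) (seq 0 (length w))) s t
            end
  end.

Lemma Xf_S L n : forall w s t, (length w <= n)%nat -> Xf L n s t w = Xf L (S n) s t w.
Proof.
  induction n as [|n IH]; intros w s t Hw.
  - destruct w; [reflexivity|simpl in Hw; lia].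
  - destruct w as [|c w']; [reflexivity|].
    change (Xf L (S n) s t (c :: w')) with
      (RInt (fun u => lsum (fun k => Xf L n s u (firstn k (c :: w')) * L u (skipn k (c :: w'))) (seq 0 (length (c :: w')))) s t).
    change (Xf L (S (S n)) s t (c :: w')) with
      (RInt (fun u => lsum (fun k => Xf L (S n) s u (firstn k (c :: w')) * L u (skipn k (c :: w'))) (seq 0 (length (c :: w')))) s t).
    apply RInt_ext. intros u _. apply lsum_ext. intros k Hk. apply in_seq in Hk.
    rewrite IH; auto. rewrite length_firstn. simpl in *. lia.
Qed.

Lemma Xf_stable L k : forall n w s t, (length w <= n)%nat -> Xf L (n + k) s t w = Xf L n s t w.
Proof.
  induction k as [|k IH]; intros n w s t Hw.
  - rewrite Nat.add_0_r. reflexivity.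
  - rewrite Nat.add_succ_r, <- Xf_S by lia. apply IH; auto.
Qed.

Definition Xc (L : R -> series) (s t : R) (w : word) : R := Xf L (length w) s t w.

Lemma Xc_ge L n w s t : (length w <= n)%nat -> Xf L n s t w = Xc L s t w.
Proof. intros H. unfold Xc. replace n with (length w + (n - length w))%nat by lia. apply Xf_stable; auto. Qed.

Lemma Xc_nil L s t : Xc L s t [] = 1.
Proof. reflexivity. Qed.

Definition gi (L : R -> series) (s t : R) (w : word) : R :=
  lsum (fun k => Xc L s t (firstn k w) * L t (skipn k w)) (seq 0 (length w)).

Lemma Xc_unfold L s t c w' : Xc L s t (c :: w') = RInt (fun u => gi L s u (c :: w')) s t.
Proof.
  unfold Xc at 1. simpl length. cbn [Xf]. apply RInt_ext. intros u _. unfold gi. apply lsum_ext.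
  intros k Hk. apply in_seq in Hk. rewrite Xc_ge; auto. rewrite length_firstn. simpl in *. lia.
Qed.

Lemma Xc_diag L s w : Xc L s s w = e0 w.
Proof.
  destruct w as [|c w']; [reflexivity|]. rewrite Xc_unfold, RInt_point. reflexivity.
Qed.

Lemma Xc_deriv L : (forall q z, continuity_pt (fun u => L u q) z) ->
  forall n w s t, (length w <= n)%nat -> is_derive (fun t => Xc L s t w) t (gi L s t w).
Proof.
  intros HL n. induction n as [n IH] using lt_wf_ind. intros w s t Hw.
  destruct w as [|c w'].
  - apply (is_derive_ext (fun _ => 1)). intros; reflexivity. unfold gi. simpl. apply (@is_derive_const R_AbsRing R_NormedModule).
  - apply (is_derive_ext (fun t => RInt (fun u => gi L s u (c :: w')) s t)).
    + intros; symmetry; apply Xc_unfold.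
    + apply ftc. intros z. unfold gi. apply continuity_lsum. intros k Hk. apply in_seq in Hk.
      apply (continuity_pt_mult (fun u => Xc L s u (firstn k (c :: w'))) (fun u => L u (skipn k (c :: w')))).
      * apply (is_derive_cont _ _ (gi L s z (firstn k (c :: w')))). apply (IH k); [simpl in *; lia|].
        rewrite length_firstn. lia.
      * apply HL.
Qed.

Lemma gi_conc L s t w : L t [] = 0 -> gi L s t w = conc (Xc L s t) (L t) w.
Proof.
  intros H0. unfold gi. rewrite conc_splits, splits_def, lsum_map, seq_S, lsum_app. simpl.
  rewrite skipn_all, H0. rewrite Rmult_0_r, !Rplus_0_r. reflexivity.
Qed.

Definition Lc d T N Y (u : R) : series := Ld d T N Y (clamp 0 T u).
Definition Xm d T N Y : gpath := Xc (Lc d T N Y).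


Lemma Lc_cont d T N Y : 0 < T -> N_sgrm d T N Y -> forall q z, continuity_pt (fun u => Lc d T N Y u q) z.
Proof.
  intros HT HY q z. unfold Lc. apply (cwithin_clamp 0 T (fun u => Ld d T N Y u q) 0 T); try lra.
  intros y Hy. destruct (Sm_deriv 0 T _ (Ld_smooth d T N Y HT HY q)) as [g Hg].
  apply (Dw_cwithin _ _ _ _ _ (Hg y Hy)).
Qed.

Lemma Lc_I d T N Y u w : in_I T u -> Lc d T N Y u w = Ld d T N Y u w.
Proof. intros Hu. unfold Lc. rewrite clamp_id; auto. Qed.

Lemma X_ode d T N Y : 0 < T -> N_sgrm d T N Y -> forall s t w, in_I T t ->
  Dw 0 T (fun r => Xm d T N Y s r w) t (conc (Xm d T N Y s t) (Ld d T N Y t) w).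
Proof.
  intros HT HY s t w Ht. apply is_derive_Dw.
  assert (HD := Xc_deriv (Lc d T N Y) (Lc_cont d T N Y HT HY) (length w) w s t (le_n _)).
  rewrite gi_conc in HD. 2:{ rewrite Lc_I by auto. apply (Ld_nil d T N Y HT HY); auto. }
  rewrite (conc_ext_gen _ (Xm d T N Y s t) _ (Ld d T N Y t)) in HD. exact HD.
  intros; split; auto. apply Lc_I; auto.
Qed.

Lemma X_chen d T N Y : 0 < T -> N_sgrm d T N Y -> forall s u t w, in_I T s -> in_I T u -> in_I T t -> valid d w ->
  conc (Xm d T N Y s u) (Xm d T N Y u t) w = Xm d T N Y s t w.
Proof.
  intros HT HY s u t w Hs Hu Ht Vw. set (X := Xm d T N Y).
  apply (ode_uniq d T (length w) (fun r => conc (X s u) (X u r)) (fun r => X s r) (Ld d T N Y) 0 T u); auto; try lra.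
  - intros y q Hy Vq Lq. exists (conc (X s u) (conc (X u y) (Ld d T N Y y)) q).
    apply (Dw_conc_r 0 T (X s u) (fun r => X u r) _ y q d); auto. intros; apply X_ode; auto.
  - intros y q Hy Vq Lq. exists (conc (X s y) (Ld d T N Y y) q). apply X_ode; auto.
  - intros y q Hy Vq Lq. rewrite conc_assoc.
    apply (Dw_conc_r 0 T (X s u) (fun r => X u r) _ y q d); auto. intros; apply X_ode; auto; unfold in_I; lra.
  - intros y q Hy Vq Lq. apply X_ode; auto; unfold in_I; lra.
  - intros y Hy. apply (Ld_nil d T N Y HT HY). unfold in_I; lra.
  - intros q Vq Lq. rewrite (conc_ext_gen _ (X s u) _ e0). apply conc_e0_r.
    intros; split; auto. apply Xc_diag.
Qed.

Lemma PL_Ld d T N Y : 0 < T -> N_sgrm d T N Y -> forall y a2 b2, in_I T y -> valid d a2 -> valid d b2 ->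
  PL (Ld d T N Y y) a2 b2 = (match a2 with [] => Ld d T N Y y b2 | _ => 0 end) + (match b2 with [] => Ld d T N Y y a2 | _ => 0 end).
Proof.
  intros HT HY y a2 b2 Hy Va Vb.
  destruct a2 as [|c a2]; destruct b2 as [|e b2].
  - rewrite PL_nil_nil, (Ld_nil d T N Y HT HY) by auto. ring.
  - rewrite PL_nil_l. ring.
  - rewrite PL_nil_r. ring.
  - destruct (Nat.le_gt_cases (length (c :: a2) + length (e :: b2)) N) as [Hle|Hgt].
    + rewrite (Ld_prim d T N Y HT HY y Hy); auto; try discriminate. ring.
    + rewrite PL_zero_on. ring. intros z Hz. apply Ld_long. lia.
Qed.

Lemma X_shuffle d T N Y : 0 < T -> N_sgrm d T N Y -> forall s, in_I T s -> forall n a b, (length a + length b <= n)%nat ->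
  valid d a -> valid d b -> forall t, in_I T t -> PL (Xm d T N Y s t) a b = Xm d T N Y s t a * Xm d T N Y s t b.
Proof.
  intros HT HY s Hs n. set (X := Xm d T N Y). set (L := Ld d T N Y).
  induction n as [n IH] using lt_wf_ind. intros a b Hn Va Vb t Ht.
  assert (HPL : forall y, in_I T y -> Dw 0 T (fun r => PL (X s r) a b) y (Sdbl (X s y) (L y) a b)).
  { intros y Hy'. rewrite <- coprod. rewrite PL_lsum. apply (Dw_ext 0 T (fun r => lsum (X s r) (shuffle a b))); auto.
    apply (Dw_lsum' 0 T (fun z r => X s r z)). intros; apply X_ode; auto. }
  assert (Hz : forall r, 0 <= r <= T -> PL (X s r) a b - X s r a * X s r b = PL (X s 0) a b - X s 0 a * X s 0 b).
  { apply (Dw_zero_const' 0 T (fun r => PL (X s r) a b - X s r a * X s r b) 0 T); try lra.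
    - intros y Hy. eexists. apply Dw_minus. apply HPL; auto.
      apply Dw_mult; apply X_ode; auto.
    - intros y Hy. assert (Hy' : in_I T y) by (unfold in_I; lra).
      assert (H1 := HPL y Hy').
      assert (H2 := Dw_mult 0 T _ _ y _ _ (X_ode d T N Y HT HY s y a Hy') (X_ode d T N Y HT HY s y b Hy')).
      assert (H3 := Dw_minus _ _ _ _ _ _ _ H1 H2). cbv beta in H3.
      assert (E : Sdbl (X s y) (L y) a b = conc (X s y) (L y) a * X s y b + X s y a * conc (X s y) (L y) b).
      { unfold Sdbl.
        rewrite (lsum_ext _ (fun uu : word * word => lsum (fun vv : word * word =>
            PL (X s y) (fst uu) (fst vv) * (match snd uu with [] => L y (snd vv) | _ => 0 end) +
            PL (X s y) (fst uu) (fst vv) * (match snd vv with [] => L y (snd uu) | _ => 0 end)) (splits b)) (splits a)).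
        2:{ intros [a1 a2] Ha. apply lsum_ext. intros [b1 b2] Hb. cbn [fst snd].
            destruct (splits_props d a a1 a2 Ha Va) as [Va1 [Va2 _]].
            destruct (splits_props d b b1 b2 Hb Vb) as [Vb1 [Vb2 _]].
            unfold L. rewrite (PL_Ld d T N Y HT HY) by auto. ring. }
        rewrite (lsum_ext _ (fun uu : word * word => lsum (fun vv : word * word =>
            PL (X s y) (fst uu) (fst vv) * (match snd uu with [] => L y (snd vv) | _ => 0 end)) (splits b) +
            lsum (fun vv : word * word => PL (X s y) (fst uu) (fst vv) * (match snd vv with [] => L y (snd uu) | _ => 0 end)) (splits b)) (splits a)).
        2:{ intros; apply lsum_plus. }
        rewrite lsum_plus. rewrite Rplus_comm. f_equal.
        - rewrite (lsum_ext _ (fun uu : word * word => (fun b1 => PL (X s y) (fst uu) b1 * L y (snd uu)) b)).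
          2:{ intros [a1 a2] _. cbn [fst snd].
              rewrite <- (lsum_splits_last (fun b1 => PL (X s y) a1 b1 * L y a2) b). apply lsum_ext.
              intros [b1 b2] _. cbn [fst snd]. destruct b2; ring. }
          rewrite conc_splits, <- lsum_scal_r. apply lsum_ext. intros [a1 a2] Ha. cbn [fst snd].
          destruct (splits_props d a a1 a2 Ha Va) as [Va1 [Va2 La]].
          destruct a2 as [|c a2]. { unfold L. rewrite (Ld_nil d T N Y HT HY) by auto. ring. }
          rewrite (IH (length a1 + length b)%nat); auto; try ring; simpl in La; lia.
        - rewrite (lsum_ext _ (fun uu : word * word => match snd uu with [] => (fun a1 => lsum (fun vv : word * word => PL (X s y) a1 (fst vv) * L y (snd vv)) (splits b)) (fst uu) | _ => 0 end)).
          2:{ intros [a1 a2] _. cbn [fst snd]. destruct a2; [reflexivity|]. apply lsum_zero; intros; ring. }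
          rewrite (lsum_splits_last (fun a1 => lsum (fun vv : word * word => PL (X s y) a1 (fst vv) * L y (snd vv)) (splits b))).
          rewrite conc_splits, <- lsum_scal. apply lsum_ext. intros [b1 b2] Hb. cbn [fst snd].
          destruct (splits_props d b b1 b2 Hb Vb) as [Vb1 [Vb2 Lb]].
          destruct b2 as [|c b2]. { unfold L. rewrite (Ld_nil d T N Y HT HY) by auto. ring. }
          rewrite (IH (length a + length b1)%nat); auto; try ring; simpl in Lb; lia. }
      rewrite E in H3. unfold X, L in H3 |- *.
      match type of H3 with Dw _ _ _ _ ?v => replace v with 0 in H3 by ring end.
      exact H3. }
  assert (H0 : PL (X s s) a b - X s s a * X s s b = 0).
  { rewrite (PL_ext _ e0) by (intros; apply Xc_diag). unfold X, Xm. rewrite !Xc_diag.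
    destruct a as [|c a]; destruct b as [|e b].
    - rewrite PL_nil_nil. simpl. ring.
    - rewrite PL_zero_on. simpl; ring. intros z Hzz. destruct z; simpl in *; [lia|reflexivity].
    - rewrite PL_zero_on. simpl; ring. intros z Hzz. destruct z; simpl in *; [lia|reflexivity].
    - rewrite PL_zero_on. simpl; ring. intros z Hzz. destruct z; simpl in *; [lia|reflexivity]. }
  assert (E1 := Hz t Ht). assert (E2 := Hz s Hs). lra.
Qed.

Lemma X_smooth d T N Y : 0 < T -> N_sgrm d T N Y -> forall s, in_I T s -> forall w, Sm 0 T (fun t => Xm d T N Y s t w).
Proof.
  intros HT HY s Hs w n. revert w. induction n as [|n IH]; intros w.
  - exists (fun _ t => Xm d T N Y s t w). split; auto. intros; lia.
  - apply (Cn_intro 0 T n _ (fun t => conc (Xm d T N Y s t) (Ld d T N Y t) w)).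
    + intros x Hx. apply X_ode; auto.
    + apply (Cn_ext 0 T n (fun t => lsum (fun pq : word * word => Xm d T N Y s t (fst pq) * Ld d T N Y t (snd pq)) (splits w))).
      intros; rewrite conc_splits; auto.
      apply (Cn_lsum 0 T n (fun pq t => Xm d T N Y s t (fst pq) * Ld d T N Y t (snd pq))).
      intros [p q] _. apply Cn_mult; [apply IH|apply Ld_smooth; auto].
Qed.

Lemma sgrm_unit d T Z : sgrm d T Z -> forall s t, in_I T s -> in_I T t -> Z s t [] = 1.
Proof.
  intros [[s0 [t0 [w0 [H1 [H2 [H3 H4]]]]]] [Hsh [Hch _]]].
  apply (gl_unit d T (length w0) Z).
  - exists s0, t0, w0. split; [auto|split; [auto|split; [auto|split; [lia|auto]]]].
  - intros; apply Hsh; auto.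
  - intros; apply Hch; auto.
Qed.

Lemma sgrm_diag d T Z : sgrm d T Z -> forall s w, in_I T s -> valid d w -> Z s s w = e0 w.
Proof.
  intros HZ s w Hs Vw. apply (gl_diag d T (length w) Z); auto.
  - apply (sgrm_unit d T Z HZ).
  - intros; apply HZ; auto.
Qed.

Lemma min_l_eq d T N Y : 0 < T -> N_sgrm d T N Y -> forall (Zy : R -> series) y l' (del : posreal),
  in_I T y -> lie_trunc d N l' -> (forall w, valid d w -> Dw 0 T (fun r => Zy r w) y (l' w)) ->
  (forall w r, valid d w -> (length w <= N)%nat -> in_I T r -> Rabs (r - y) < del -> Zy r w = Y y r w) ->
  forall w, valid d w -> l' w = Ld d T N Y y w.
Proof.
  intros HT HY Zy y l' del Hy Hl HD Hag w Vw.
  destruct (Nat.le_gt_cases (length w) N) as [Lw|Lw].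
  - apply (Dw_unique 0 T (fun r => Y y r w) y); auto.
    + apply (Dw_ext_loc 0 T (fun r => Zy r w) _ y _ del).
      * intros r Hr Hrd. apply Hag; auto.
      * apply Hag; auto. rewrite Rminus_diag, Rabs_R0. apply cond_pos.
      * apply HD; auto.
    + apply (Ld_spec d T N Y HY); auto.
  - rewrite Ld_long by auto. destruct Hl as [z [_ Hz]]. rewrite Hz.
    replace (Nat.leb (length w) N) with false by (symmetry; apply Nat.leb_gt; lia). reflexivity.
Qed.

Lemma sgrm_min_exists d T N Z : sgrm d T Z -> minimal d T N Z -> forall s y w, in_I T s -> in_I T y -> valid d w ->
  exists m, Dw 0 T (fun r => Z s r w) y m.
Proof.
  intros HZ Hm s y w Hs Hy Vw. destruct (Hm y Hy) as [l' [_ Hl']].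
  exists (conc (Z s y) l' w). apply (chen_deriv d T Z s y w l' Hy Vw).
  - intros r Hr. symmetry. apply HZ; auto.
  - intros q Vq _. apply Hl'; auto.
Qed.

Lemma sgrm_min_ode d T N Y : 0 < T -> N_sgrm d T N Y -> forall Z, sgrm d T Z -> minimal d T N Z ->
  forall y (del : posreal), in_I T y ->
  (forall w r, valid d w -> (length w <= N)%nat -> in_I T r -> Rabs (r - y) < del -> Z y r w = Y y r w) ->
  forall s w, in_I T s -> valid d w -> Dw 0 T (fun r => Z s r w) y (conc (Z s y) (Ld d T N Y y) w).
Proof.
  intros HT HY Z HZ Hm y del Hy Hag s w Hs Vw. destruct (Hm y Hy) as [l' [Hl Hl']].
  apply (chen_deriv d T Z s y w _ Hy Vw).
  - intros r Hr. symmetry. apply HZ; auto.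
  - intros q Vq _. rewrite <- (min_l_eq d T N Y HT HY (fun r => Z y r) y l' del); auto.
Qed.

Theorem theorem2p8 (d : nat) (T : R) (N : nat) (Y : gpath) :
  (1 <= d)%nat -> 0 < T -> N_sgrm d T N Y ->
  (exists X : gpath,
     sgrm d T X /\ extends d T N X Y /\ minimal d T N X /\
     (* uniqueness *)
     (forall X' : gpath, sgrm d T X' -> extends d T N X' Y -> minimal d T N X' ->
        forall s t w, in_I T s -> in_I T t -> valid d w -> X' s t w = X s t w) /\
     (* diagonal derivative of X equals that of Y (viewed in T((R^d))) *)
     (forall s w, in_I T s -> valid d w ->
        ((length w <= N)%nat -> forall l,
           has_deriv_within 0 T (fun t => Y s t w) s l ->
           has_deriv_within 0 T (fun t => X s t w) s l) /\
        ((N < length w)%nat -> has_deriv_within 0 T (fun t => X s t w) s 0))) /\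
  (* locality: X_{s,t} depends only on Y restricted to [s,t]^2 *)
  (forall (Y' X X' : gpath) (s t : R),
     N_sgrm d T N Y' -> 0 <= s -> s <= t -> t <= T ->
     (forall u v w, s <= u <= t -> s <= v <= t -> valid d w ->
        (length w <= N)%nat -> Y u v w = Y' u v w) ->
     sgrm d T X -> extends d T N X Y -> minimal d T N X ->
     sgrm d T X' -> extends d T N X' Y' -> minimal d T N X' ->
     forall w, valid d w -> X s t w = X' s t w).
Proof.
  intros Hd HT HY.
  assert (I0 : in_I T 0) by (unfold in_I; lra).
  set (X := Xm d T N Y).
  assert (Hext : extends d T N X Y).
  { intros s t w Hs Ht Vw Lw.
    apply (ode_uniq d T N (fun r => X s r) (fun r => Y s r) (Ld d T N Y) 0 T s); auto; try lra.
    - intros y q Hy Vq Lq. eexists. apply X_ode; auto.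
    - intros y q Hy Vq Lq. eexists. apply (Y_ode d T N Y HY); auto.
    - intros y q Hy Vq Lq. apply X_ode; auto. unfold in_I; lra.
    - intros y q Hy Vq Lq. apply (Y_ode d T N Y HY); auto. unfold in_I; lra.
    - intros y Hy. apply (Ld_nil d T N Y HT HY). unfold in_I; lra.
    - intros q Vq Lq. unfold X, Xm. rewrite Xc_diag, (Y_diag d T N Y HY); auto. }
  assert (Hsg : sgrm d T X).
  { split; [|split; [|split]].
    - exists 0, 0, []. split; [auto|split; [auto|split; [constructor|]]]. unfold X, Xm. rewrite Xc_nil. lra.
    - intros s t v w Hs Ht Vv Vw. rewrite pl_lsum, <- PL_lsum.
      apply (X_shuffle d T N Y HT HY s Hs (length v + length w)); auto.
    - intros s u t w Hs Hu Ht Vw. apply X_chen; auto.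
    - intros s w Hs Vw. apply Sm_smooth; auto. apply X_smooth; auto. }
  assert (Hmin : minimal d T N X).
  { intros s Hs. exists (Ld d T N Y s). split.
    - apply friedrichs.
      + apply (Ld_nil d T N Y HT HY); auto.
      + intros; apply Ld_inv; auto.
      + intros; apply Ld_long; auto.
      + apply (Ld_prim d T N Y HT HY); auto.
    - intros w Vw. assert (HD := X_ode d T N Y HT HY s s w Hs).
      rewrite (conc_ext_gen _ e0 _ (Ld d T N Y s)), conc_e0_l in HD. exact HD.
      intros; split; auto. apply Xc_diag. }
  split.
  - exists X. split; [exact Hsg|split; [exact Hext|split; [exact Hmin|split]]].
    + intros X' HX' Hext' Hmin' s t w Hs Ht Vw.
      apply (ode_uniq d T (length w) (fun r => X' s r) (fun r => X s r) (Ld d T N Y) 0 T s); auto; try lra.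
      * intros y q Hy Vq Lq. apply (sgrm_min_exists d T N X'); auto.
      * intros y q Hy Vq Lq. eexists. apply X_ode; auto.
      * intros y q Hy Vq Lq. assert (Hy' : in_I T y) by (unfold in_I; lra).
        apply (sgrm_min_ode d T N Y HT HY X' HX' Hmin' y (mkposreal 1 Rlt_0_1) Hy'); try (intros q' r Vq' Lq' Hr _; apply Hext'; auto); auto.
      * intros y q Hy Vq Lq. apply X_ode; auto. unfold in_I; lra.
      * intros y Hy. apply (Ld_nil d T N Y HT HY). unfold in_I; lra.
      * intros q Vq Lq. rewrite (sgrm_diag d T X' HX'), (sgrm_diag d T X Hsg); auto.
    + intros s w Hs Vw. split.
      * intros Lw l Hl. apply (Dw_ext 0 T (fun t => Y s t w)); auto.
        intros t Ht. symmetry. apply Hext; auto.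
      * intros Lw. assert (HD := X_ode d T N Y HT HY s s w Hs).
        rewrite (conc_ext_gen _ e0 _ (Ld d T N Y s)) in HD.
        2:{ intros; split; auto. apply Xc_diag. }
        rewrite conc_e0_l, Ld_long in HD by auto. exact HD.
  - intros Y' X1 X1' s t HY' Hs Hst Ht Hag HX1 Hext1 Hmin1 HX1' Hext1' Hmin1' w Vw.
    assert (Hs' : in_I T s) by (unfold in_I; lra).
    apply (ode_uniq d T (length w) (fun r => X1 s r) (fun r => X1' s r) (Ld d T N Y) s t s); auto; try lra.
    + intros y q Hy Vq Lq. apply (sgrm_min_exists d T N X1); auto. unfold in_I; lra.
    + intros y q Hy Vq Lq. apply (sgrm_min_exists d T N X1'); auto. unfold in_I; lra.
    + intros y q Hy Vq Lq. assert (Hy' : in_I T y) by (unfold in_I; lra).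
      apply (sgrm_min_ode d T N Y HT HY X1 HX1 Hmin1 y (mkposreal 1 Rlt_0_1) Hy'); try (intros q' r Vq' Lq' Hr _; apply Hext1; auto); auto.
    + intros y q Hy Vq Lq.
      assert (Hm : 0 < Rmin (y - s) (t - y)) by (apply Rmin_pos; lra).
      assert (Hy' : in_I T y) by (unfold in_I; lra).
      apply (sgrm_min_ode d T N Y HT HY X1' HX1' Hmin1' y (mkposreal _ Hm) Hy'); auto.
      intros q' r Vq' Lq' Hr Hrd. simpl in Hrd.
      assert (H1 := Rmin_l (y - s) (t - y)). assert (H2 := Rmin_r (y - s) (t - y)).
      apply Rabs_def2 in Hrd.
      rewrite Hext1' by (auto; unfold in_I; lra). symmetry. apply Hag; auto; lra.
    + intros y Hy. apply (Ld_nil d T N Y HT HY). unfold in_I; lra.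
    + intros q Vq Lq. rewrite (sgrm_diag d T X1 HX1), (sgrm_diag d T X1' HX1'); auto.
Qed.
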